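(* For $|q|<1$ and generic $k$ ($k\neq1$, no vanishing denominators): \begin{gather*} \sum_{n\ge0}\frac{(1-kq^{2n})(k;q)_n}{(1-k)(q;q)_n}(-1)^nk^nq^{n(3n-1)/2}=(kq;q)_\infty,\\ \sum_{n\ge0}\frac{(1-kq^{4n})(-q,k;q^2)_n}{(1-k)(-kq,q^2;q^2)_n}(-1)^nk^nq^{2n^2-n}=\frac{(kq^2;q^2)_\infty}{(-kq;q^2)_\infty},\\ \sum_{n\ge0}\frac{(1-kq^{2n})(-1,k;q)_n}{(1-k)(-kq,q;q)_n}(-1)^nk^nq^{n^2}=\frac{(kq;q)_\infty}{(-kq;q)_\infty},\\ \sum_{n\ge0}\frac{(1-kq^{2n})(k^2;q^2)_n}{(1-k)(q^2;q^2)_n}(-1)^nq^{n^2}=(kq;q)_\infty(q;q^2)_\infty,\\ \sum_{n\ge0}\frac{(1-kq^{4n})(-q;q^2)_n(k^2;q^4)_n}{(1-k)(-kq;q^2)_n(q^4;q^4)_n}(-1)^nq^{n^2}=\frac{(kq^2;q^2)_\infty(q;q)_\infty}{(-kq;q^2)_\infty(q^4;q^4)_\infty},\\ \sum_{n\ge0}\frac{(1-kq^{4n})(k;q)_{2n}}{(1-k)(q;q)_{2n}}q^{2n^2-n}=\frac{(kq^2;q^2)_\infty}{(q;q^2)_\infty},\\ \sum_{n\ge0}\frac{(1-kq^{4n})(-q;q^2)_n(k;q)_{2n}}{(1-k)(-kq;q^2)_n(q;q)_{2n}}q^{n^2-n}=\frac{(kq^2,-1;q^2)_\infty}{(-kq,q;q^2)_\infty}.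 \end{gather*}
   Context: Notation: $(x;q)_n=\prod_{i=0}^{n-1}(1-xq^i)$, $(x;q)_\infty=\prod_{i\ge0}(1-xq^i)$, and $(x_1,\dots,x_j;q)_n=(x_1;q)_n\cdots(x_j;q)_n$ (also for $n=\infty$). *)

(* Defs.v *)
From Stdlib Require Import Reals.
Open Scope R_scope.

Definition Cplx : Type := (R * R)%type.
Definition RtoC (r : R) : Cplx := (r, 0).
Definition Czero : Cplx := (0, 0).
Definition Cone : Cplx := (1, 0).
Definition Cadd (z w : Cplx) : Cplx := (fst z + fst w, snd z + snd w).
Definition Copp (z : Cplx) : Cplx := (- fst z, - snd z).
Definition Csub (z w : Cplx) : Cplx := Cadd z (Copp w).
Definition Cmul (z w : Cplx) : Cplx :=
  (fst z * fst w - snd z * snd w, fst z * snd w + snd z * fst w).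
Definition Cinv (z : Cplx) : Cplx :=
  (fst z / (fst z ^ 2 + snd z ^ 2), - snd z / (fst z ^ 2 + snd z ^ 2)).
Definition Cdiv (z w : Cplx) : Cplx := Cmul z (Cinv w).
Definition Cnorm (z : Cplx) : R := sqrt (fst z ^ 2 + snd z ^ 2).
Fixpoint Cpow (z : Cplx) (n : nat) : Cplx :=
  match n with O => Cone | S m => Cmul z (Cpow z m) end.

Declare Scope C_scope.
Delimit Scope C_scope with C.
Infix "+" := Cadd : C_scope.
Infix "-" := Csub : C_scope.
Infix "*" := Cmul : C_scope.
Infix "/" := Cdiv : C_scope.
Notation "- z" := (Copp z) : C_scope.
Infix "^" := Cpow : C_scope.

Fixpoint qpoch (x q : Cplx) (n : nat) : Cplx :=
  match n with
  | O => Cone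
  | S m => Cmul (qpoch x q m) (Csub Cone (Cmul x (Cpow q m)))
  end.

(* Partial sums: Csum f N = f 0 + ... + f (N-1). *)
Fixpoint Csum (f : nat -> Cplx) (N : nat) : Cplx :=
  match N with O => Czero | S m => Cadd (Csum f m) (f m) end.

Definition Cconv (u : nat -> Cplx) (l : Cplx) : Prop :=
  forall eps : R, eps > 0 -> exists N : nat, forall n : nat, (n >= N)%nat ->
    Cnorm (Csub (u n) l) < eps.

Definition Cseries (f : nat -> Cplx) (L : Cplx) : Prop := Cconv (Csum f) L.

Definition qinf (x q P : Cplx) : Prop := Cconv (qpoch x q) P.
Arguments Cpow _ _%_nat.
Arguments qpoch _ _ _%_nat.

(* Main.v *)
Require Import Defs.
From Stdlib Require Import Reals.
From Stdlib Require Import Lra Lia Psatz Field ClassicalEpsilon Classical.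
From Coquelicot Require Complex.
Open Scope R_scope.
Local Open Scope C_scope.


Lemma Cfth : field_theory Czero Cone Cadd Cmul Csub Copp Cdiv Cinv (@eq Cplx).
Proof. exact Complex.C_field_theory. Qed.
Add Field Cfield : Cfth.
Arguments Cnorm z%_C.
Arguments qpoch x%_C q%_C n%_nat.
Arguments Cconv u%_function l%_C.

Lemma Cnorm_mult (z w : Cplx) : Cnorm (z * w) = (Cnorm z * Cnorm w)%R.
Proof. exact (Complex.Cmod_mult z w). Qed.
Lemma Cnorm_triangle (z w : Cplx) : (Cnorm (z + w)%C <= Cnorm z + Cnorm w)%R.
Proof. exact (Complex.Cmod_triangle z w). Qed.
Lemma Cnorm_ge0 (z : Cplx) : (0 <= Cnorm z)%R.
Proof. exact (Complex.Cmod_ge_0 z). Qed.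
Lemma Cnorm_opp (z : Cplx) : Cnorm (- z) = Cnorm z.
Proof. exact (Complex.Cmod_opp z). Qed.
Lemma Cnorm_one : Cnorm Cone = 1%R.
Proof. exact Complex.Cmod_1. Qed.
Lemma Cnorm_zero : Cnorm Czero = 0%R.
Proof. exact Complex.Cmod_0. Qed.
Lemma Cnorm_pow (z : Cplx) n : Cnorm (z ^ n) = (Cnorm z ^ n)%R.
Proof. exact (Complex.Cmod_pow z n). Qed.
Lemma Cnorm_eq0 z : Cnorm z = 0%R -> z = Czero.
Proof. exact (Complex.Cmod_eq_0 z). Qed.
Lemma Cnorm_pos z : z <> Czero -> (0 < Cnorm z)%R.
Proof. intro H. apply (proj1 (Complex.Cmod_gt_0 z)). exact H. Qed.
Lemma Cnorm_inv z : z <> Czero -> Cnorm (Cinv z) = / Cnorm z.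
Proof. exact (Complex.Cmod_inv z). Qed.
Lemma Cnorm_sub (z w : Cplx) : (Cnorm (z - w)%C <= Cnorm z + Cnorm w)%R.
Proof. unfold Csub. rewrite <- (Cnorm_opp w). apply Cnorm_triangle. Qed.
Lemma Cnorm_sub_rev (z w : Cplx) : (Cnorm z - Cnorm w <= Cnorm (z - w)%C)%R.
Proof.
  assert (H := Cnorm_triangle (z - w) w).
  replace (z - w + w)%C with z in H by field. lra.
Qed.
Lemma Cnorm_sub_sym z w : Cnorm (z - w) = Cnorm (w - z).
Proof. replace (z - w) with (- (w - z)) by field. apply Cnorm_opp. Qed.
Lemma Cnorm_neq0 z : z <> Czero -> Cnorm z <> 0%R.
Proof. intros H. apply Rgt_not_eq. apply Cnorm_pos; auto. Qed.

Lemma Cpow_S z n : z ^ S n = z * z ^ n.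
Proof. reflexivity. Qed.
Lemma Cpow_O z : z ^ O = Cone.
Proof. reflexivity. Qed.
Lemma Cpow_add z m n : z ^ (m + n) = z ^ m * z ^ n.
Proof. induction m; simpl. field. rewrite IHm. field. Qed.
Lemma Cpow_mul z m n : z ^ (m * n) = (z ^ m) ^ n.
Proof.
  induction n. rewrite Nat.mul_0_r. reflexivity.
  replace (m * S n)%nat with (m + m * n)%nat by lia.
  rewrite Cpow_add, IHn. reflexivity.
Qed.
Lemma Cpow_mult_distr z w n : (z * w) ^ n = z ^ n * w ^ n.
Proof. induction n; simpl. field. rewrite IHn. field. Qed.
Lemma Cpow_one n : Cone ^ n = Cone.
Proof. induction n; simpl. reflexivity. rewrite IHn. field. Qed.
Lemma Cpow_zero n : Czero ^ S n = Czero.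
Proof. simpl. field. Qed.
Lemma Cpow_neq0 z n : z <> Czero -> z ^ n <> Czero.
Proof.
  intros H Hc. apply Cnorm_neq0 in H. apply (f_equal Cnorm) in Hc.
  rewrite Cnorm_pow, Cnorm_zero in Hc. apply (pow_nonzero (Cnorm z) n H Hc).
Qed.
Lemma Cmul_neq0 z w : z <> Czero -> w <> Czero -> z * w <> Czero.
Proof.
  intros H1 H2 Hc. apply (f_equal Cnorm) in Hc. rewrite Cnorm_mult, Cnorm_zero in Hc.
  apply Cnorm_pos in H1. apply Cnorm_pos in H2. nra.
Qed.
Lemma Cneg1_sq n : (- Cone) ^ n * (- Cone) ^ n = Cone.
Proof. induction n; simpl. field. transitivity ((- Cone) ^ n * (- Cone) ^ n). field. exact IHn. Qed.

Lemma pow_le1 (x : R) n : (0 <= x <= 1)%R -> (x ^ n <= 1)%R.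
Proof. intros H. induction n; simpl. lra. assert (0 <= x ^ n)%R by (apply pow_le; lra). nra. Qed.
Lemma pow_decr (x : R) m n : (0 <= x <= 1)%R -> (m <= n)%nat -> (x ^ n <= x ^ m)%R.
Proof.
  intros H Hmn. replace n with (m + (n - m))%nat by lia. rewrite pow_add.
  assert (0 <= x ^ m)%R by (apply pow_le; lra). assert (x ^ (n-m) <= 1)%R by (apply pow_le1; lra). nra.
Qed.
Lemma geom_small (th c eps : R) : (0 <= th < 1)%R -> (0 < eps)%R ->
  exists N, forall n, (n >= N)%nat -> (c * th ^ n < eps)%R.
Proof.
  intros Hth Heps.
  destruct (Rle_lt_dec c 0) as [Hc|Hc].
  - exists O. intros n _. assert (0 <= th ^ n)%R by (apply pow_le; lra). nra.
  - destruct (pow_lt_1_zero th) with (y := (eps / c)%R) as [N HN].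
    rewrite Rabs_pos_eq; lra. apply Rdiv_lt_0_compat; lra.
    exists N. intros n Hn. specialize (HN n Hn). rewrite Rabs_pos_eq in HN by (apply pow_le; lra).
    apply Rmult_lt_compat_l with (r := c) in HN; auto. replace (c * (eps / c))%R with eps in HN by (field; lra). exact HN.
Qed.

Lemma Cnorm_le_comp (z : Cplx) : (Cnorm z <= Rabs (fst z) + Rabs (snd z))%R.
Proof.
  unfold Cnorm. rewrite <- (sqrt_square (Rabs (fst z) + Rabs (snd z))).
  2: { assert (H1:= Rabs_pos (fst z)). assert (H2:=Rabs_pos (snd z)). lra. }
  apply sqrt_le_1_alt.
  assert (H1:= Rabs_pos (fst z)). assert (H2:=Rabs_pos (snd z)).
  rewrite <- (pow2_abs (fst z)), <- (pow2_abs (snd z)). nra.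
Qed.
Lemma fst_le_Cnorm (z : Cplx) : (Rabs (fst z) <= Cnorm z)%R.
Proof. exact (Complex.re_le_Cmod z). Qed.
Lemma snd_le_Cnorm (z : Cplx) : (Rabs (snd z) <= Cnorm z)%R.
Proof.
  unfold Cnorm. rewrite <- sqrt_Rsqr_abs. apply sqrt_le_1_alt. unfold Rsqr.
  assert (0 <= fst z ^ 2)%R by (apply pow2_ge_0). simpl. lra.
Qed.

Lemma Cconv_unique u l1 l2 : Cconv u l1 -> Cconv u l2 -> l1 = l2.
Proof.
  intros H1 H2.
  destruct (Req_dec (Cnorm (l1 - l2)) 0) as [E|E].
  { apply Cnorm_eq0 in E. transitivity (l1 - l2 + l2). field. rewrite E. field. }
  assert (Hp : (0 < Cnorm (l1 - l2))%R) by (assert (H:=Cnorm_ge0 (l1 - l2)); lra).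
  destruct (H1 (Cnorm (l1 - l2) / 2)%R) as [N1 HN1]. lra.
  destruct (H2 (Cnorm (l1 - l2) / 2)%R) as [N2 HN2]. lra.
  specialize (HN1 (N1 + N2)%nat ltac:(lia)). specialize (HN2 (N1 + N2)%nat ltac:(lia)).
  assert (H := Cnorm_triangle (l1 - u (N1+N2)%nat) (u (N1+N2)%nat - l2)).
  replace (l1 - u (N1 + N2)%nat + (u (N1 + N2)%nat - l2)) with (l1 - l2) in H by field.
  rewrite (Cnorm_sub_sym l1 (u _)) in H. lra.
Qed.

Lemma Cconv_ext u v l : (forall n, u n = v n) -> Cconv u l -> Cconv v l.
Proof. intros E H eps He. destruct (H eps He) as [N HN]. exists N. intros n Hn. rewrite <- E. auto. Qed.

Lemma Cconv_const c : Cconv (fun _ => c) c.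
Proof. intros eps He. exists O. intros. replace (c - c) with Czero by field. rewrite Cnorm_zero. lra. Qed.

Lemma Cconv_eventually_const u c N : (forall n, (n >= N)%nat -> u n = c) -> Cconv u c.
Proof. intros H eps He. exists N. intros n Hn. rewrite H by auto. replace (c - c) with Czero by field. rewrite Cnorm_zero. lra. Qed.

Lemma Cconv_add u v l m : Cconv u l -> Cconv v m -> Cconv (fun n => u n + v n) (l + m).
Proof.
  intros H1 H2 eps He.
  destruct (H1 (eps/2)%R) as [N1 HN1]. lra. destruct (H2 (eps/2)%R) as [N2 HN2]. lra.
  exists (N1 + N2)%nat. intros n Hn. specialize (HN1 n ltac:(lia)). specialize (HN2 n ltac:(lia)).
  replace (u n + v n - (l + m)) with ((u n - l) + (v n - m)) by field.
  assert (H := Cnorm_triangle (u n - l) (v n - m)). lra.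
Qed.

Lemma Cconv_opp u l : Cconv u l -> Cconv (fun n => - u n) (- l).
Proof.
  intros H eps He. destruct (H eps He) as [N HN]. exists N. intros n Hn.
  replace (- u n - - l) with (- (u n - l)) by field. rewrite Cnorm_opp. auto.
Qed.

Lemma Cconv_sub u v l m : Cconv u l -> Cconv v m -> Cconv (fun n => u n - v n) (l - m).
Proof. intros. apply Cconv_add; auto. apply Cconv_opp; auto. Qed.

Lemma Cconv_bounded u l : Cconv u l -> exists M, (0 <= M)%R /\ forall n, (Cnorm (u n) <= M)%R.
Proof.
  intros H. destruct (H 1%R) as [N HN]. lra.
  assert (exists M, (0 <= M)%R /\ forall n, (n <= N)%nat -> (Cnorm (u n) <= M)%R) as [M1 [HM1 HM1']].
  { clear HN. induction N.
    - exists (Cnorm (u O)). split. apply Cnorm_ge0. intros n Hn. replace n with O by lia. lra.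
    - destruct IHN as [M [HM HM']]. exists (Rmax M (Cnorm (u (S N)))). split.
      apply Rle_trans with M; auto. apply Rmax_l.
      intros n Hn. destruct (Nat.eq_dec n (S N)). subst. apply Rmax_r.
      apply Rle_trans with M. apply HM'. lia. apply Rmax_l. }
  exists (Rmax M1 (Cnorm l + 1)). split. apply Rle_trans with M1; auto. apply Rmax_l.
  intros n. destruct (Arith.Compare_dec.le_lt_dec n N).
  - apply Rle_trans with M1. auto. apply Rmax_l.
  - apply Rle_trans with (Cnorm l + 1)%R. 2: apply Rmax_r.
    specialize (HN n ltac:(lia)). assert (Hx := Cnorm_triangle (u n - l) l).
    replace (u n - l + l) with (u n) in Hx by field. lra.
Qed.

Lemma Cconv_mult u v l m : Cconv u l -> Cconv v m -> Cconv (fun n => u n * v n) (l * m).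
Proof.
  intros H1 H2. destruct (Cconv_bounded u l H1) as [M [HM HM']].
  intros eps He.
  set (e1 := (eps / (2 * (Cnorm m + 1)))%R).
  set (e2 := (eps / (2 * (M + 1)))%R).
  assert (Hm := Cnorm_ge0 m).
  assert (He1 : (0 < e1)%R) by (unfold e1; apply Rdiv_lt_0_compat; lra).
  assert (He2 : (0 < e2)%R) by (unfold e2; apply Rdiv_lt_0_compat; lra).
  destruct (H1 e1 He1) as [N1 HN1]. destruct (H2 e2 He2) as [N2 HN2].
  exists (N1 + N2)%nat. intros n Hn. specialize (HN1 n ltac:(lia)). specialize (HN2 n ltac:(lia)).
  replace (u n * v n - l * m) with (u n * (v n - m) + (u n - l) * m) by field.
  eapply Rle_lt_trans. apply Cnorm_triangle. rewrite !Cnorm_mult.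
  specialize (HM' n). assert (H0 := Cnorm_ge0 (u n)). assert (H0' := Cnorm_ge0 (v n - m)). assert (H0'' := Cnorm_ge0 (u n - l)).
  assert (A1 : (Cnorm (u n) * Cnorm (v n - m) <= M * e2)%R) by (apply Rmult_le_compat; lra).
  assert (A2 : (Cnorm (u n - l) * Cnorm m <= e1 * Cnorm m)%R) by (apply Rmult_le_compat_r; lra).
  assert (A3 : (M * e2 < eps / 2)%R).
  { unfold e2. apply Rmult_lt_reg_r with (2 * (M + 1))%R. lra. replace (M * (eps / (2 * (M + 1))) * (2 * (M + 1)))%R with (M * eps)%R by (field; lra). nra. }
  assert (A4 : (e1 * Cnorm m < eps / 2)%R).
  { unfold e1. apply Rmult_lt_reg_r with (2 * (Cnorm m + 1))%R. lra. replace (eps / (2 * (Cnorm m + 1)) * Cnorm m * (2 * (Cnorm m + 1)))%R with (Cnorm m * eps)%R by (field; lra). nra. }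
  lra.
Qed.

Lemma Cconv_inv u l : Cconv u l -> l <> Czero -> Cconv (fun n => Cinv (u n)) (Cinv l).
Proof.
  intros H Hl. assert (Hp := Cnorm_pos l Hl).
  destruct (H (Cnorm l / 2)%R) as [N0 HN0]. lra.
  assert (Hlow : forall n, (n >= N0)%nat -> (Cnorm l / 2 <= Cnorm (u n))%R).
  { intros n Hn. specialize (HN0 n Hn). assert (Hx := Cnorm_sub_rev l (l - u n)).
    replace (l - (l - u n)) with (u n) in Hx by field. rewrite Cnorm_sub_sym in Hx. lra. }
  intros eps He.
  destruct (H (eps * (Cnorm l * Cnorm l / 2))%R) as [N1 HN1]. apply Rmult_lt_0_compat; nra.
  exists (N0 + N1)%nat. intros n Hn. specialize (Hlow n ltac:(lia)). specialize (HN1 n ltac:(lia)).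
  assert (Hu : u n <> Czero). { intros E. rewrite E, Cnorm_zero in Hlow. lra. }
  replace (Cinv (u n) - Cinv l) with ((l - u n) * Cinv (u n) * Cinv l) by (field; auto).
  rewrite !Cnorm_mult, !Cnorm_inv by auto. rewrite Cnorm_sub_sym.
  assert (Hun := Cnorm_pos _ Hu).
  apply Rmult_lt_reg_r with (Cnorm (u n) * Cnorm l)%R. nra.
  field_simplify; try lra.
  apply Rlt_le_trans with (eps * (Cnorm l * Cnorm l / 2))%R. lra.
  assert (0 < eps)%R by lra. 
  apply Rle_trans with (eps * (Cnorm l * Cnorm (u n)))%R. 2: lra.
  apply Rmult_le_compat_l. lra. nra.
Qed.

Lemma Cconv_div u v l m : Cconv u l -> Cconv v m -> m <> Czero -> Cconv (fun n => u n / v n) (l / m).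
Proof. intros. unfold Cdiv. apply Cconv_mult; auto. apply Cconv_inv; auto. Qed.

Lemma Cconv_subseq u l (phi : nat -> nat) : (forall n, (n <= phi n)%nat) -> Cconv u l -> Cconv (fun n => u (phi n)) l.
Proof. intros Hphi H eps He. destruct (H eps He) as [N HN]. exists N. intros n Hn. apply HN. specialize (Hphi n). lia. Qed.

Lemma Cconv_le u l a B N : Cconv u l -> (forall n, (n >= N)%nat -> (Cnorm (u n - a) <= B)%R) -> (Cnorm (l - a) <= B)%R.
Proof.
  intros H HB. destruct (Rle_lt_dec (Cnorm (l - a)) B) as [h|h]; auto.
  destruct (H (Cnorm (l - a) - B)%R) as [N1 HN1]. lra.
  specialize (HN1 (N + N1)%nat ltac:(lia)). specialize (HB (N + N1)%nat ltac:(lia)).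
  assert (Hx := Cnorm_triangle (l - u (N + N1)%nat) (u (N+N1)%nat - a)).
  replace (l - u (N + N1)%nat + (u (N + N1)%nat - a)) with (l - a) in Hx by field.
  rewrite (Cnorm_sub_sym l (u _)) in Hx. lra.
Qed.

Lemma Cconv_norm_lb u l c : Cconv u l -> (forall n, (c <= Cnorm (u n))%R) -> (c <= Cnorm l)%R.
Proof.
  intros H Hc. destruct (Rle_lt_dec c (Cnorm l)) as [h|h]; auto.
  destruct (H (c - Cnorm l)%R) as [N HN]. lra. specialize (HN N (le_n _)). specialize (Hc N).
  assert (Hx := Cnorm_triangle (u N - l) l). replace (u N - l + l) with (u N) in Hx by field. lra.
Qed.

Lemma Cconv_geom u l (C0 th : R) : (0 <= th < 1)%R -> (forall n, (Cnorm (u n - l) <= C0 * th ^ n)%R) -> Cconv u l.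
Proof.
  intros Hth H eps He. destruct (geom_small th C0 eps Hth He) as [N HN]. exists N. intros n Hn.
  specialize (HN n Hn). specialize (H n). lra.
Qed.

Lemma Cconv_pow_zero (p : Cplx) : (Cnorm p < 1)%R -> Cconv (fun j => p ^ j) Czero.
Proof.
  intros Hp. apply Cconv_geom with (C0 := 1%R) (th := Cnorm p). split; auto. apply Cnorm_ge0.
  intros n. replace (p ^ n - Czero) with (p ^ n) by field. rewrite Cnorm_pow. lra.
Qed.

Lemma Cauchy_geom_bound u (C0 th : R) : (0 <= C0)%R -> (0 <= th < 1)%R ->
  (forall n, (Cnorm (u (S n) - u n) <= C0 * th ^ n)%R) ->
  forall n m, (Cnorm (u (n + m)%nat - u n) <= C0 * th ^ n * (1 - th ^ m) / (1 - th))%R.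
Proof.
  intros HC Hth H n m. induction m.
  - rewrite Nat.add_0_r. replace (u n - u n) with Czero by field. rewrite Cnorm_zero. simpl.
    replace (C0 * th ^ n * (1 - 1) / (1 - th))%R with 0%R by (field; lra). lra.
  - replace (n + S m)%nat with (S (n + m)) by lia.
    assert (Hx := Cnorm_triangle (u (S (n + m)) - u (n + m)%nat) (u (n + m)%nat - u n)).
    replace (u (S (n + m)) - u (n + m)%nat + (u (n + m)%nat - u n)) with (u (S (n + m)) - u n) in Hx by field.
    specialize (H (n + m)%nat). rewrite pow_add in H.
    apply Rle_trans with (C0 * (th ^ n * th ^ m) + C0 * th ^ n * (1 - th ^ m) / (1 - th))%R. lra.
    right. simpl. field. lra.
Qed.

Lemma Cauchy_geom_bound' u (C0 th : R) : (0 <= C0)%R -> (0 <= th < 1)%R ->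
  (forall n, (Cnorm (u (S n) - u n) <= C0 * th ^ n)%R) ->
  forall n m, (m >= n)%nat -> (Cnorm (u m - u n) <= C0 * th ^ n / (1 - th))%R.
Proof.
  intros HC Hth H n m Hm. replace m with (n + (m - n))%nat by lia.
  assert (Hb := Cauchy_geom_bound u C0 th HC Hth H n (m-n)).
  eapply Rle_trans; [exact Hb|].
  assert (0 <= th ^ n)%R by (apply pow_le; lra). assert (0 <= th ^ (m-n))%R by (apply pow_le; lra).
  unfold Rdiv. apply Rmult_le_compat_r. left. apply Rinv_0_lt_compat. lra.
  assert (0 <= C0 * th ^ n)%R by (apply Rmult_le_pos; lra). nra.
Qed.

Lemma Cauchy_geom u (C0 th : R) : (0 <= C0)%R -> (0 <= th < 1)%R ->
  (forall n, (Cnorm (u (S n) - u n) <= C0 * th ^ n)%R) ->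
  exists l, Cconv u l /\ forall n, (Cnorm (l - u n) <= C0 * th ^ n / (1 - th))%R.
Proof.
  intros HC Hth H. assert (HB := Cauchy_geom_bound' u C0 th HC Hth H).
  assert (Hsmall : forall eps, (0 < eps)%R -> exists N, forall n m, (n >= N)%nat -> (m >= N)%nat -> (Cnorm (u m - u n) < eps)%R).
  { intros eps He. destruct (geom_small th (C0 / (1 - th)) eps Hth He) as [N HN]. exists N.
    intros n m Hn Hm. destruct (Arith.Compare_dec.le_lt_dec n m).
    - eapply Rle_lt_trans. apply HB; lia. specialize (HN n Hn). replace (C0 * th ^ n / (1 - th))%R with (C0 / (1 - th) * th ^ n)%R by (field; lra). auto.
    - rewrite Cnorm_sub_sym. eapply Rle_lt_trans. apply HB; lia. specialize (HN m Hm). replace (C0 * th ^ m / (1 - th))%R with (C0 / (1 - th) * th ^ m)%R by (field; lra). auto. }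
  destruct (R_complete (fun n => fst (u n))) as [lr Hlr].
  { intros eps He. destruct (Hsmall eps He) as [N HN]. exists N. intros n m Hn Hm. unfold Rdist.
    eapply Rle_lt_trans. 2: apply (HN m n Hm Hn). apply (fst_le_Cnorm (u n - u m)). }
  destruct (R_complete (fun n => snd (u n))) as [li Hli].
  { intros eps He. destruct (Hsmall eps He) as [N HN]. exists N. intros n m Hn Hm. unfold Rdist.
    eapply Rle_lt_trans. 2: apply (HN m n Hm Hn). apply (snd_le_Cnorm (u n - u m)). }
  assert (Hc : Cconv u (lr, li)).
  { intros eps He. destruct (Hlr (eps/2)%R) as [N1 HN1]. lra. destruct (Hli (eps/2)%R) as [N2 HN2]. lra.
    exists (N1 + N2)%nat. intros n Hn. specialize (HN1 n ltac:(lia)). specialize (HN2 n ltac:(lia)).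
    unfold Rdist in *. eapply Rle_lt_trans. apply Cnorm_le_comp.
    replace (fst (u n - (lr, li))) with (fst (u n) - lr)%R by (unfold Csub, Cadd, Copp; simpl; ring).
    replace (snd (u n - (lr, li))) with (snd (u n) - li)%R by (unfold Csub, Cadd, Copp; simpl; ring). lra. }
  exists (lr, li). split; auto. intros n. apply Cconv_le with (u := u) (N := n); auto.
Qed.

Lemma Csum_S f n : Csum f (S n) = Csum f n + f n.
Proof. reflexivity. Qed.
Lemma Csum_O f : Csum f O = Czero.
Proof. reflexivity. Qed.
Lemma Csum_ext f g n : (forall i, f i = g i) -> Csum f n = Csum g n.
Proof. intros H. induction n. reflexivity. rewrite !Csum_S, IHn, H. reflexivity. Qed.

Lemma Cseries_ext f g L : (forall n, f n = g n) -> Cseries f L -> Cseries g L.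
Proof. intros E H. unfold Cseries in *. apply Cconv_ext with (Csum f); auto. intros. apply Csum_ext; auto. Qed.

Lemma Cseries_unique f L1 L2 : Cseries f L1 -> Cseries f L2 -> L1 = L2.
Proof. apply Cconv_unique. Qed.

Lemma Cseries_geom f (C0 th : R) : (0 <= C0)%R -> (0 <= th < 1)%R ->
  (forall n, (Cnorm (f n) <= C0 * th ^ n)%R) ->
  exists L, Cseries f L /\ forall N, (Cnorm (L - Csum f N) <= C0 * th ^ N / (1 - th))%R.
Proof.
  intros HC Hth H. apply Cauchy_geom; auto. intros n. rewrite Csum_S.
  replace (Csum f n + f n - Csum f n) with (f n) by field. auto.
Qed.

Lemma Cseries_tail f L (C0 th : R) : (0 <= C0)%R -> (0 <= th < 1)%R ->
  (forall n, (Cnorm (f n) <= C0 * th ^ n)%R) -> Cseries f L ->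
  forall N, (Cnorm (L - Csum f N) <= C0 * th ^ N / (1 - th))%R.
Proof.
  intros HC Hth H HL. destruct (Cseries_geom f C0 th HC Hth H) as [L' [HL' HB]].
  rewrite (Cseries_unique f L L'); auto.
Qed.

Lemma Cseries_add f g L M : Cseries f L -> Cseries g M -> Cseries (fun n => f n + g n) (L + M).
Proof.
  intros H1 H2. unfold Cseries. apply Cconv_ext with (fun n => Csum f n + Csum g n).
  intros n. induction n. simpl. unfold Czero, Cadd. simpl. f_equal; ring.
  rewrite !Csum_S, <- IHn. field. apply Cconv_add; auto.
Qed.

Lemma Cseries_scal c f L : Cseries f L -> Cseries (fun n => c * f n) (c * L).
Proof.
  intros H. unfold Cseries. apply Cconv_ext with (fun n => c * Csum f n).
  intros n. induction n. simpl. unfold Czero, Cmul. simpl. f_equal; ring.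
  rewrite !Csum_S, <- IHn. field. apply Cconv_mult; auto. apply Cconv_const.
Qed.

Lemma Cseries_telescope f G : (forall n, f n = G n - G (S n)) -> Cconv G Czero -> Cseries f (G O).
Proof.
  intros E H. unfold Cseries. apply Cconv_ext with (fun n => G O - G n).
  intros n. induction n. rewrite Csum_O. field. rewrite Csum_S, <- IHn, E. field.
  assert (H2 := Cconv_sub _ _ _ _ (Cconv_const (G O)) H). replace (G O - Czero) with (G O) in H2 by field. exact H2.
Qed.

Lemma Cseries_finite f N : (forall n, (n >= N)%nat -> f n = Czero) -> Cseries f (Csum f N).
Proof.
  intros H. unfold Cseries. apply Cconv_eventually_const with N. intros n Hn.
  induction Hn. reflexivity. rewrite Csum_S, IHHn, H by lia. field.
Qed.

Definition csum (f : nat -> Cplx) : Cplx := epsilon (inhabits Czero) (fun L => Cseries f L).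
Lemma csum_spec f : (exists L, Cseries f L) -> Cseries f (csum f).
Proof. intros H. unfold csum. apply epsilon_spec. exact H. Qed.

Lemma Cconv_Csum (f : nat -> nat -> Cplx) g : (forall n, Cconv (fun j => f j n) (g n)) ->
  forall N, Cconv (fun j => Csum (f j) N) (Csum g N).
Proof.
  intros H N. induction N.
  - simpl. apply Cconv_const.
  - simpl. apply Cconv_add; auto.
Qed.

Lemma Tannery (f : nat -> nat -> Cplx) g (C0 th : R) (Lj : nat -> Cplx) :
  (0 <= C0)%R -> (0 <= th < 1)%R ->
  (forall n, Cconv (fun j => f j n) (g n)) ->
  (forall j n, (Cnorm (f j n) <= C0 * th ^ n)%R) ->
  (forall j, Cseries (f j) (Lj j)) ->
  exists L, Cseries g L /\ Cconv Lj L.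
Proof.
  intros HC Hth Hpt Hb HL.
  assert (Hg : forall n, (Cnorm (g n) <= C0 * th ^ n)%R).
  { intros n. replace (g n) with (g n - Czero) by field.
    apply Cconv_le with (u := fun j => f j n) (N := O); auto. intros j _.
    replace (f j n - Czero) with (f j n) by field. auto. }
  destruct (Cseries_geom g C0 th HC Hth Hg) as [L [HgL HgB]].
  exists L. split; auto.
  intros eps He.
  destruct (geom_small th (2 * C0 / (1 - th))%R (eps / 2)%R Hth) as [N HN]. lra.
  specialize (HN N (le_n _)).
  destruct (Cconv_Csum f g Hpt N (eps / 2)%R) as [J HJ]. lra.
  exists J. intros j Hj. specialize (HJ j Hj).
  assert (T1 := Cseries_tail (f j) (Lj j) C0 th HC Hth (Hb j) (HL j) N).
  assert (T2 := HgB N).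
  replace (Lj j - L) with ((Lj j - Csum (f j) N) + (Csum (f j) N - Csum g N) - (L - Csum g N)) by field.
  eapply Rle_lt_trans. apply Cnorm_sub. eapply Rle_lt_trans. apply Rplus_le_compat_r. apply Cnorm_triangle.
  replace (2 * C0 / (1 - th) * th ^ N)%R with (C0 * th ^ N / (1 - th) + C0 * th ^ N / (1 - th))%R in HN by (field; lra).
  lra.
Qed.

Fixpoint prodC (f : nat -> Cplx) (n : nat) : Cplx :=
  match n with O => Cone | S m => prodC f m * f m end.

Lemma prodC_S f n : prodC f (S n) = prodC f n * f n.
Proof. reflexivity. Qed.

Lemma prodC_ext f g n : (forall i, (i < n)%nat -> f i = g i) -> prodC f n = prodC g n.
Proof. intros H. induction n. reflexivity. simpl. rewrite IHn. rewrite H by lia. reflexivity. intros; apply H; lia. Qed.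

Lemma prodC_add f m n : prodC f (m + n) = prodC f m * prodC (fun i => f (m + i)%nat) n.
Proof. induction n. rewrite Nat.add_0_r. simpl. field. replace (m + S n)%nat with (S (m + n)) by lia. simpl. rewrite IHn. field. Qed.

Lemma prodC_mult f g n : prodC (fun i => f i * g i) n = prodC f n * prodC g n.
Proof. induction n. simpl. field. simpl. rewrite IHn. field. Qed.

Lemma prodC_const c n : prodC (fun _ => c) n = c ^ n.
Proof. induction n. reflexivity. simpl. rewrite IHn. field. Qed.

Lemma prodC_neq0 f n : (forall i, (i < n)%nat -> f i <> Czero) -> prodC f n <> Czero.
Proof. intros H. induction n. simpl. unfold Cone, Czero. intros E. injection E. lra.
  simpl. apply Cmul_neq0. apply IHn. intros. apply H. lia. apply H. lia. Qed.

Lemma Cconv_prodC (f : nat -> nat -> Cplx) g n : (forall i, Cconv (fun j => f j i) (g i)) ->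
  Cconv (fun j => prodC (f j) n) (prodC g n).
Proof. intros H. induction n. simpl. apply Cconv_const. simpl. apply Cconv_mult; auto. Qed.


Lemma qpoch_S x p n : qpoch x p (S n) = qpoch x p n * (Cone - x * p ^ n).
Proof. reflexivity. Qed.
Lemma qpoch_O x p : qpoch x p O = Cone.
Proof. reflexivity. Qed.
Lemma qpoch_prodC x p n : qpoch x p n = prodC (fun i => Cone - x * p ^ i) n.
Proof. induction n. reflexivity. rewrite qpoch_S, IHn. reflexivity. Qed.
Lemma qpoch_add x p m n : qpoch x p (m + n) = qpoch x p m * qpoch (x * p ^ m) p n.
Proof.
  rewrite !qpoch_prodC, prodC_add. f_equal. apply prodC_ext. intros i _. rewrite Cpow_add. field.
Qed.
Lemma qpoch_shift1 x p n : qpoch x p (S n) = (Cone - x) * qpoch (x * p) p n.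
Proof.
  replace (S n) with (1 + n)%nat by lia. rewrite qpoch_add. simpl. f_equal. field. f_equal. field.
Qed.
Lemma qpoch_zero p n : qpoch Czero p n = Cone.
Proof. induction n. reflexivity. rewrite qpoch_S, IHn. field. Qed.
Lemma qpoch_ext x y p n : x = y -> qpoch x p n = qpoch y p n.
Proof. intros ->. reflexivity. Qed.

Lemma qpoch_neq0_small x p n : (Cnorm x < 1)%R -> (Cnorm p <= 1)%R -> qpoch x p n <> Czero.
Proof.
  intros Hx Hp. rewrite qpoch_prodC. apply prodC_neq0. intros i _ E.
  assert (Hn : Cnorm (x * p ^ i) = 1%R).
  { replace (x * p ^ i) with Cone. apply Cnorm_one. transitivity (Cone - (Cone - x * p ^ i)). rewrite E. field. field. }
  rewrite Cnorm_mult, Cnorm_pow in Hn.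
  assert (0 <= Cnorm p ^ i <= 1)%R by (split; [apply pow_le; apply Cnorm_ge0| apply pow_le1; split; [apply Cnorm_ge0|lra]]).
  assert (H0 := Cnorm_ge0 x). nra.
Qed.

Lemma exp_mono_le x y : (x <= y)%R -> (exp x <= exp y)%R.
Proof. intros H. destruct (Rle_lt_or_eq_dec _ _ H) as [h|h]. left. apply exp_increasing; auto. rewrite h. lra. Qed.

Section QP.
Variable p : Cplx.
Hypothesis Hp : (Cnorm p < 1)%R.
Let r := Cnorm p.
Lemma r_bounds : (0 <= r < 1)%R.
Proof. split. apply Cnorm_ge0. exact Hp. Qed.

Definition Mq (x : Cplx) : R := exp (Cnorm x / (1 - r)).

Lemma qpoch_upper x n : (Cnorm (qpoch x p n) <= Mq x)%R.
Proof.
  assert (Hr := r_bounds). assert (Hx := Cnorm_ge0 x).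
  assert (H : (Cnorm (qpoch x p n) <= exp (Cnorm x * (1 - r ^ n) / (1 - r)))%R).
  { induction n.
    - simpl. rewrite Cnorm_one. replace (Cnorm x * (1 - 1) / (1 - r))%R with 0%R by (field; lra). rewrite exp_0. lra.
    - rewrite qpoch_S, Cnorm_mult.
      assert (H1 : (Cnorm (Cone - x * p ^ n)%C <= 1 + Cnorm x * r ^ n)%R).
      { eapply Rle_trans. apply Cnorm_sub. rewrite Cnorm_one, Cnorm_mult, Cnorm_pow. fold r. lra. }
      assert (H2 : (1 + Cnorm x * r ^ n <= exp (Cnorm x * r ^ n))%R) by apply exp_ineq1_le.
      replace (Cnorm x * (1 - r ^ S n) / (1 - r))%R with (Cnorm x * (1 - r ^ n) / (1 - r) + Cnorm x * r ^ n)%R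
        by (simpl; field; lra).
      rewrite exp_plus. apply Rmult_le_compat; try apply Cnorm_ge0; lra. }
  eapply Rle_trans. apply H. unfold Mq. apply exp_mono_le.
  assert (0 <= r ^ n)%R by (apply pow_le; lra).
  unfold Rdiv. apply Rmult_le_compat_r. left; apply Rinv_0_lt_compat; lra. nra.
Qed.

Lemma Mq_pos x : (0 < Mq x)%R.
Proof. apply exp_pos. Qed.

Lemma qpoch_exists x : exists P, qinf x p P.
Proof.
  assert (Hr := r_bounds).
  destruct (Cauchy_geom (qpoch x p) (Mq x * Cnorm x) r) as [P [HP _]]; auto.
  apply Rmult_le_pos. left. apply Mq_pos. apply Cnorm_ge0.
  intros n. rewrite qpoch_S. replace (qpoch x p n * (Cone - x * p ^ n) - qpoch x p n) with (- (qpoch x p n * (x * p ^ n))) by field.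
  rewrite Cnorm_opp, !Cnorm_mult, Cnorm_pow. fold r.
  assert (H := qpoch_upper x n). assert (0 <= Cnorm x * r ^ n)%R by (apply Rmult_le_pos; [apply Cnorm_ge0|apply pow_le; lra]).
  replace (Mq x * Cnorm x * r ^ n)%R with (Mq x * (Cnorm x * r ^ n))%R by ring.
  apply Rmult_le_compat_r; auto.
  exists P. exact HP.
Qed.

Lemma qpoch_tail_lower y n : (Cnorm y <= (1 - r) / 2)%R -> (1/2 <= Cnorm (qpoch y p n))%R.
Proof.
  intros Hy. assert (Hr := r_bounds). assert (Hy0 := Cnorm_ge0 y).
  assert (H : (1 - Cnorm y * (1 - r ^ n) / (1 - r) <= Cnorm (qpoch y p n))%R).
  { induction n.
    - simpl. rewrite Cnorm_one. replace (Cnorm y * (1 - 1) / (1 - r))%R with 0%R by (field; lra). lra.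
    - rewrite qpoch_S, Cnorm_mult.
      assert (H1 : (1 - Cnorm y * r ^ n <= Cnorm (Cone - y * p ^ n)%C)%R).
      { assert (Hx := Cnorm_sub_rev Cone (y * p ^ n)). rewrite Cnorm_one, Cnorm_mult, Cnorm_pow in Hx. fold r in Hx. exact Hx. }
      assert (0 <= r ^ n <= 1)%R by (split; [apply pow_le; lra| apply pow_le1; lra]).
      assert (0 <= 1 - r ^ n)%R by lra.
      assert (A1 : (Cnorm y * (1 - r ^ n) / (1 - r) <= Cnorm y / (1 - r))%R).
      { unfold Rdiv. apply Rmult_le_compat_r. left; apply Rinv_0_lt_compat; lra. nra. }
      assert (A2 : (Cnorm y / (1 - r) <= 1/2)%R).
      { apply Rmult_le_reg_r with (1 - r)%R. lra. unfold Rdiv. rewrite Rmult_assoc, Rinv_l by lra. lra. }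
      assert (A3 : (Cnorm y * r ^ n <= 1/2)%R).
      { assert (Cnorm y * r ^ n <= Cnorm y)%R by nra. lra. }
      replace (1 - Cnorm y * (1 - r ^ S n) / (1 - r))%R with ((1 - Cnorm y * (1 - r ^ n) / (1 - r)) - Cnorm y * r ^ n)%R by (simpl; field; lra).
      assert (0 <= Cnorm y * r ^ n)%R by (apply Rmult_le_pos; lra).
      assert (0 <= Cnorm y * (1 - r ^ n) / (1 - r))%R.
      { unfold Rdiv. apply Rmult_le_pos. nra. left; apply Rinv_0_lt_compat; lra. }
      nra. }
  eapply Rle_trans. 2: exact H.
  assert (0 <= r ^ n <= 1)%R by (split; [apply pow_le; lra| apply pow_le1; lra]).
  assert (A1 : (Cnorm y * (1 - r ^ n) / (1 - r) <= Cnorm y / (1 - r))%R).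
  { unfold Rdiv. apply Rmult_le_compat_r. left; apply Rinv_0_lt_compat; lra. nra. }
  assert (A2 : (Cnorm y / (1 - r) <= 1/2)%R).
  { apply Rmult_le_reg_r with (1 - r)%R. lra. unfold Rdiv. rewrite Rmult_assoc, Rinv_l by lra. lra. }
  lra.
Qed.

Lemma finite_min (a : nat -> R) N : (forall n, (0 < a n)%R) -> exists c, (0 < c)%R /\ forall n, (n <= N)%nat -> (c <= a n)%R.
Proof.
  intros H. induction N.
  - exists (a O). split; auto. intros n Hn. replace n with O by lia. lra.
  - destruct IHN as [c [Hc Hc']]. exists (Rmin c (a (S N))). split. apply Rmin_pos; auto.
    intros n Hn. destruct (Nat.eq_dec n (S N)). subst. apply Rmin_r.
    apply Rle_trans with c. apply Rmin_l. apply Hc'. lia.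
Qed.

Lemma qpoch_lower x : (forall n, qpoch x p n <> Czero) -> exists c, (0 < c)%R /\ forall n, (c <= Cnorm (qpoch x p n))%R.
Proof.
  intros Hnz. assert (Hr := r_bounds).
  destruct (geom_small r (Cnorm x) ((1 - r) / 2)%R Hr) as [N0 HN0]. lra.
  specialize (HN0 N0 (le_n _)).
  destruct (finite_min (fun n => Cnorm (qpoch x p n)) N0) as [c [Hc Hc']].
  { intros n. apply Cnorm_pos. auto. }
  exists (Rmin c (Cnorm (qpoch x p N0) / 2)). split.
  { apply Rmin_pos; auto. assert (H := Cnorm_pos _ (Hnz N0)). lra. }
  intros n. destruct (Arith.Compare_dec.le_lt_dec n N0).
  - apply Rle_trans with c. apply Rmin_l. apply Hc'. auto.
  - apply Rle_trans with (Cnorm (qpoch x p N0) / 2)%R. apply Rmin_r.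
    replace n with (N0 + (n - N0))%nat by lia. rewrite qpoch_add, Cnorm_mult.
    assert (H1 : (1/2 <= Cnorm (qpoch (x * p ^ N0)%C p (n - N0)))%R).
    { apply qpoch_tail_lower. rewrite Cnorm_mult, Cnorm_pow. fold r. lra. }
    assert (H2 := Cnorm_ge0 (qpoch x p N0)). nra.
Qed.

Lemma qinf_neq0 x P : (forall n, qpoch x p n <> Czero) -> qinf x p P -> P <> Czero.
Proof.
  intros Hnz HP. destruct (qpoch_lower x Hnz) as [c [Hc Hc']].
  assert (H := Cconv_norm_lb _ _ _ HP Hc'). intros E. rewrite E, Cnorm_zero in H. lra.
Qed.

Lemma qpoch_shift_lower x : (forall n, qpoch x p n <> Czero) ->
  exists c, (0 < c)%R /\ forall j n, (c <= Cnorm (qpoch (x * p ^ j)%C p n))%R.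
Proof.
  intros Hnz. destruct (qpoch_lower x Hnz) as [c [Hc Hc']].
  exists (c / Mq x)%R. split. apply Rdiv_lt_0_compat; auto. apply Mq_pos.
  intros j n. assert (E := qpoch_add x p j n).
  apply (f_equal Cnorm) in E. rewrite Cnorm_mult in E.
  assert (H1 := Hc' (j + n)%nat). assert (H2 := qpoch_upper x j). assert (H3 := Mq_pos x).
  assert (H4 := Cnorm_ge0 (qpoch (x * p ^ j)%C p n)). assert (H5 := Cnorm_ge0 (qpoch x p j)).
  apply Rmult_le_reg_r with (Mq x). auto. unfold Rdiv. rewrite Rmult_assoc, Rinv_l by lra. rewrite Rmult_1_r.
  rewrite E in H1. nra.
Qed.

Lemma qpoch_shift_neq0 x j n : (forall n, qpoch x p n <> Czero) -> qpoch (x * p ^ j) p n <> Czero.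
Proof.
  intros Hnz E. assert (H := qpoch_add x p j n). rewrite E in H.
  apply (Hnz (j + n)%nat). rewrite H. field.
Qed.

End QP.

Fixpoint tri (n : nat) : nat := match n with O => O | S m => (tri m + m)%nat end.

Definition Aa (p a : Cplx) (n : nat) : Cplx :=
  match n with O => Cone | S m => (Cone - a * p ^ (2 * S m)) * qpoch (a * p) p m end.
Definition Ee (p a b : Cplx) (n : nat) : Cplx := prodC (fun i => b - a * p ^ (S i)) n.
Definition Bb (p g : Cplx) (n : nat) : Cplx := prodC (fun i => g - p ^ i) n.
Definition Den (p a b g : Cplx) (n : nat) : Cplx := qpoch p p n * qpoch b p n * qpoch (a * p * g)%C p n.
Definition Tm (p a b g : Cplx) (n : nat) : Cplx :=
  Aa p a n * Ee p a b n * Bb p g n * (- Cone) ^ n * p ^ (tri n) / Den p a b g n.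

Lemma Cconv_qpoch (x : nat -> Cplx) x0 p n : Cconv x x0 -> Cconv (fun j => qpoch (x j) p n) (qpoch x0 p n).
Proof.
  intros H. apply Cconv_ext with (fun j => prodC (fun i => Cone - x j * p ^ i) n).
  intros j. rewrite qpoch_prodC. reflexivity. rewrite qpoch_prodC.
  apply Cconv_prodC with (f := fun j i => Cone - x j * p ^ i). intros i.
  apply Cconv_sub. apply Cconv_const. apply Cconv_mult. auto. apply Cconv_const.
Qed.

Lemma Cconv_Aa (a : nat -> Cplx) a0 p n : Cconv a a0 -> Cconv (fun j => Aa p (a j) n) (Aa p a0 n).
Proof.
  intros H. destruct n. simpl. apply Cconv_const. simpl Aa.
  apply Cconv_mult. apply Cconv_sub. apply Cconv_const. apply Cconv_mult. auto. apply Cconv_const.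
  apply Cconv_qpoch. apply Cconv_mult. auto. apply Cconv_const.
Qed.

Lemma Cconv_Tm (a b g : nat -> Cplx) a0 b0 g0 p n : Cconv a a0 -> Cconv b b0 -> Cconv g g0 ->
  Den p a0 b0 g0 n <> Czero ->
  Cconv (fun j => Tm p (a j) (b j) (g j) n) (Tm p a0 b0 g0 n).
Proof.
  intros Ha Hb Hg Hd. unfold Tm. apply Cconv_div; auto.
  - apply Cconv_mult. 2: apply Cconv_const. apply Cconv_mult. 2: apply Cconv_const.
    apply Cconv_mult. apply Cconv_mult. apply Cconv_Aa; auto.
    unfold Ee. apply Cconv_prodC with (f := fun j i => b j - a j * p ^ S i). intros i.
    apply Cconv_sub. auto. apply Cconv_mult. auto. apply Cconv_const.
    unfold Bb. apply Cconv_prodC with (f := fun j i => g j - p ^ i). intros i.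
    apply Cconv_sub. auto. apply Cconv_const.
  - unfold Den. apply Cconv_mult. apply Cconv_mult. apply Cconv_const. apply Cconv_qpoch; auto.
    apply Cconv_qpoch. apply Cconv_mult. apply Cconv_mult. auto. apply Cconv_const. auto.
Qed.

Lemma prodC_norm_bound f (M : R) n : (forall i, (Cnorm (f i) <= M)%R) -> (Cnorm (prodC f n) <= M ^ n)%R.
Proof.
  intros H. induction n. change (prodC f 0) with Cone. rewrite Cnorm_one. simpl. lra.
  rewrite prodC_S. simpl pow. rewrite Cnorm_mult, (Rmult_comm M). apply Rmult_le_compat; try apply Cnorm_ge0; auto.
Qed.

Lemma norm_pow_le1 (p : Cplx) i : (Cnorm p <= 1)%R -> (Cnorm (p ^ i)%C <= 1)%R.
Proof. intros H. rewrite Cnorm_pow. apply pow_le1. split; auto. apply Cnorm_ge0. Qed.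

Lemma factor_bound (u v p : Cplx) i : (Cnorm p <= 1)%R -> (Cnorm (u - v * p ^ i)%C <= Cnorm u + Cnorm v)%R.
Proof.
  intros H. eapply Rle_trans. apply Cnorm_sub. rewrite Cnorm_mult.
  assert (H1 := norm_pow_le1 p i H). assert (H2 := Cnorm_ge0 v). nra.
Qed.

Lemma qpoch_bound x p n : (Cnorm p <= 1)%R -> (Cnorm (qpoch x p n) <= (1 + Cnorm x) ^ n)%R.
Proof.
  intros H. rewrite qpoch_prodC. apply prodC_norm_bound. intros i.
  rewrite <- Cnorm_one. apply factor_bound; auto.
Qed.

Lemma Aa_bound p a n : (Cnorm p <= 1)%R -> (Cnorm (Aa p a n) <= (1 + Cnorm a) ^ n)%R.
Proof.
  intros H. destruct n. change (Aa p a 0) with Cone. rewrite Cnorm_one. simpl. lra.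
  unfold Aa. rewrite Cnorm_mult. simpl pow.
  apply Rmult_le_compat; try apply Cnorm_ge0.
  rewrite <- Cnorm_one. apply factor_bound; auto.
  eapply Rle_trans. apply qpoch_bound; auto. apply pow_incr. split. assert (H0:=Cnorm_ge0 (a*p)). lra.
  rewrite Cnorm_mult. assert (H0 := Cnorm_ge0 a). assert (H1 := Cnorm_ge0 p). nra.
Qed.

Lemma Ee_bound p a b n : (Cnorm p <= 1)%R -> (Cnorm (Ee p a b n) <= (Cnorm b + Cnorm a) ^ n)%R.
Proof. intros H. apply prodC_norm_bound. intros i. apply factor_bound; auto. Qed.

Lemma Bb_bound p g n : (Cnorm p <= 1)%R -> (Cnorm (Bb p g n) <= (Cnorm g + 1) ^ n)%R.
Proof.
  intros H. apply prodC_norm_bound. intros i. eapply Rle_trans. apply Cnorm_sub.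
  assert (H1 := norm_pow_le1 p i H). lra.
Qed.

Lemma Cnorm_neg1_pow n : Cnorm ((- Cone) ^ n) = 1%R.
Proof. rewrite Cnorm_pow, Cnorm_opp, Cnorm_one. apply pow1. Qed.

Lemma Tm_bound p a b g (Ra Rb Rg cp cb cg : R) n :
  (Cnorm p < 1)%R -> (Cnorm a <= Ra)%R -> (Cnorm b <= Rb)%R -> (Cnorm g <= Rg)%R ->
  (0 < cp)%R -> (0 < cb)%R -> (0 < cg)%R ->
  (cp <= Cnorm (qpoch p p n))%R -> (cb <= Cnorm (qpoch b p n))%R -> (cg <= Cnorm (qpoch (a * p * g)%C p n))%R ->
  (Cnorm (Tm p a b g n) <= ((1 + Ra) * (Rb + Ra) * (Rg + 1)) ^ n * Cnorm p ^ (tri n) / (cp * cb * cg))%R.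
Proof.
  intros Hp Ha Hb Hg Hcp Hcb Hcg Hdp Hdb Hdg.
  assert (Hp1 : (Cnorm p <= 1)%R) by lra.
  unfold Tm, Cdiv, Den. rewrite !Cnorm_mult.
  assert (Hnz : qpoch p p n * qpoch b p n * qpoch (a * p * g)%C p n <> Czero).
  { intros E. apply (f_equal Cnorm) in E. rewrite !Cnorm_mult, Cnorm_zero in E.
    assert (0 < Cnorm (qpoch p p n) * Cnorm (qpoch b p n) * Cnorm (qpoch (a * p * g)%C p n))%R.
    { apply Rmult_lt_0_compat. apply Rmult_lt_0_compat. lra. lra. lra. } lra. }
  rewrite Cnorm_inv by auto. rewrite !Cnorm_mult, Cnorm_neg1_pow, Cnorm_pow.
  assert (A1 : (Cnorm (Aa p a n) <= (1 + Ra) ^ n)%R).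
  { eapply Rle_trans. apply Aa_bound; auto. apply pow_incr. split. assert (H0 := Cnorm_ge0 a). lra. lra. }
  assert (A2 : (Cnorm (Ee p a b n) <= (Rb + Ra) ^ n)%R).
  { eapply Rle_trans. apply Ee_bound; auto. apply pow_incr. split. assert (H0 := Cnorm_ge0 a). assert (H1 := Cnorm_ge0 b). lra. lra. }
  assert (A3 : (Cnorm (Bb p g n) <= (Rg + 1) ^ n)%R).
  { eapply Rle_trans. apply Bb_bound; auto. apply pow_incr. split. assert (H0 := Cnorm_ge0 g). lra. lra. }
  rewrite !Rpow_mult_distr.
  assert (P0 := Cnorm_ge0 (Aa p a n)). assert (P1 := Cnorm_ge0 (Ee p a b n)). assert (P2 := Cnorm_ge0 (Bb p g n)).
  assert (P3 : (0 <= Cnorm p ^ tri n)%R) by (apply pow_le; apply Cnorm_ge0).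
  assert (Hinv : (/ (Cnorm (qpoch p p n) * Cnorm (qpoch b p n) * Cnorm (qpoch (a * p * g)%C p n)) <= / (cp * cb * cg))%R).
  { apply Rinv_le_contravar. apply Rmult_lt_0_compat. apply Rmult_lt_0_compat; auto. auto.
    apply Rmult_le_compat. apply Rmult_le_pos; lra. lra. apply Rmult_le_compat; lra. lra. }
  assert (Hinv0 : (0 <= / (Cnorm (qpoch p p n) * Cnorm (qpoch b p n) * Cnorm (qpoch (a * p * g)%C p n)))%R).
  { left. apply Rinv_0_lt_compat. apply Rmult_lt_0_compat. apply Rmult_lt_0_compat; lra. lra. }
  set (D := (/ (Cnorm (qpoch p p n) * Cnorm (qpoch b p n) * Cnorm (qpoch (a * p * g)%C p n)))%R) in *.
  set (X := (Cnorm (Aa p a n) * Cnorm (Ee p a b n) * Cnorm (Bb p g n))%R).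
  set (Y := ((1 + Ra) ^ n * (Rb + Ra) ^ n * (Rg + 1) ^ n)%R).
  assert (HXY : (X <= Y)%R).
  { unfold X, Y. apply Rmult_le_compat. apply Rmult_le_pos; auto. auto.
    apply Rmult_le_compat; auto. auto. }
  assert (HX0 : (0 <= X)%R) by (unfold X; repeat apply Rmult_le_pos; auto).
  assert (H1 : (X * Cnorm p ^ tri n <= Y * Cnorm p ^ tri n)%R) by (apply Rmult_le_compat_r; auto).
  assert (H2 : (X * Cnorm p ^ tri n * D <= Y * Cnorm p ^ tri n * / (cp * cb * cg))%R).
  { apply Rmult_le_compat; auto. apply Rmult_le_pos; auto. }
  replace (Cnorm (Aa p a n) * Cnorm (Ee p a b n) * Cnorm (Bb p g n) * 1 * Cnorm p ^ tri n * D)%R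
    with (X * Cnorm p ^ tri n * D)%R by (unfold X; ring).
  unfold Rdiv. rewrite ?Rmult_1_r. exact H2.
Qed.

Lemma finite_max (a : nat -> R) N : exists C0, (0 <= C0)%R /\ forall n, (n <= N)%nat -> (a n <= C0)%R.
Proof.
  induction N.
  - exists (Rmax 0 (a O)). split. apply Rmax_l. intros n Hn. replace n with O by lia. apply Rmax_r.
  - destruct IHN as [c [Hc Hc']]. exists (Rmax c (a (S N))). split. apply Rle_trans with c; auto. apply Rmax_l.
    intros n Hn. destruct (Nat.eq_dec n (S N)). subst. apply Rmax_r.
    apply Rle_trans with c. apply Hc'. lia. apply Rmax_l.
Qed.

Lemma tri_geom (K r : R) : (0 <= K)%R -> (0 <= r < 1)%R ->
  exists C0, (0 <= C0)%R /\ forall n, (K ^ n * r ^ (tri n) <= C0 * (1/2) ^ n)%R.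
Proof.
  intros HK Hr.
  destruct (geom_small r (2 * K) 1%R Hr) as [N HN]. lra.
  set (h := fun n => ((2 * K) ^ n * r ^ tri n)%R).
  assert (HS : forall n, h (S n) = (h n * (2 * K * r ^ n))%R).
  { intros n. unfold h. simpl. rewrite pow_add. ring. }
  assert (Hh0 : forall n, (0 <= h n)%R). { intros n. unfold h. apply Rmult_le_pos; apply pow_le; lra. }
  destruct (finite_max h N) as [C0 [HC0 HC0']].
  assert (Hall : forall n, (h n <= C0)%R).
  { induction n. apply HC0'. lia.
    destruct (Arith.Compare_dec.le_lt_dec (S n) N). apply HC0'. auto.
    rewrite HS. specialize (HN n ltac:(lia)). specialize (Hh0 n).
    assert (0 <= 2 * K * r ^ n)%R by (apply Rmult_le_pos; [lra|apply pow_le; lra]). nra. }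
  exists C0. split; auto. intros n. specialize (Hall n). unfold h in Hall.
  rewrite Rpow_mult_distr in Hall.
  replace (K ^ n * r ^ tri n)%R with (2 ^ n * K ^ n * r ^ tri n * (1/2) ^ n)%R.
  apply Rmult_le_compat_r. apply pow_le; lra. lra.
  assert (E : (2 ^ n * (1/2) ^ n = 1)%R).
  { rewrite <- Rpow_mult_distr. replace (2 * (1/2))%R with 1%R by field. apply pow1. }
  transitivity (K ^ n * r ^ tri n * (2 ^ n * (1/2) ^ n))%R. ring. rewrite E. ring.
Qed.

Lemma Ee_S p a b n : Ee p a b (S n) = Ee p a b n * (b - a * p ^ S n).
Proof. reflexivity. Qed.
Lemma Bb_S p g n : Bb p g (S n) = Bb p g n * (g - p ^ n).
Proof. reflexivity. Qed.
Lemma Ee_O p a b : Ee p a b O = Cone.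
Proof. reflexivity. Qed.
Lemma Bb_O p g : Bb p g O = Cone.
Proof. reflexivity. Qed.
Lemma Ee_bp p a b m : Ee p a (b * p) (S m) = p ^ S m * (b - a) * Ee p a b m.
Proof.
  induction m.
  - rewrite Ee_S, !Ee_O. simpl. field.
  - rewrite Ee_S, IHm, (Ee_S p a b m). simpl. field.
Qed.
Lemma Bb_gp p g m : Bb p (g * p) (S m) = (g * p - Cone) * p ^ m * Bb p g m.
Proof.
  induction m.
  - rewrite Bb_S, !Bb_O. simpl. field.
  - rewrite Bb_S, IHm, (Bb_S p g m). simpl. field.
Qed.
Lemma Ee_ap p a n : Ee p (a * p) Czero n = p ^ n * Ee p a Czero n.
Proof.
  induction n.
  - rewrite !Ee_O. simpl. field.
  - rewrite !Ee_S, IHn. simpl. field.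
Qed.
Lemma pow_tri_S p n : p ^ tri (S n) = p ^ tri n * p ^ n.
Proof. simpl tri. apply Cpow_add. Qed.
Lemma qpoch_bp b p n : Cone - b <> Czero -> qpoch (b * p) p n = qpoch b p (S n) / (Cone - b).
Proof. intros H. rewrite qpoch_shift1. field. auto. Qed.
Lemma pow2S p m : p ^ (2 * S m) = (p * p ^ m) * (p * p ^ m).
Proof. replace (2 * S m)%nat with (S m + S m)%nat by lia. rewrite Cpow_add. reflexivity. Qed.
Lemma neg1S n : (- Cone) ^ S n = - (- Cone) ^ n.
Proof. simpl. field. Qed.

Lemma Cone_neq0 : Cone <> Czero.
Proof. unfold Cone, Czero. intros E. injection E. lra. Qed.
Lemma Cmul_neq0_l z w : z * w <> Czero -> z <> Czero.
Proof. intros H E. apply H. rewrite E. field. Qed.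
Lemma Cmul_neq0_r z w : z * w <> Czero -> w <> Czero.
Proof. intros H E. apply H. rewrite E. field. Qed.

Definition G1 p a b g n := match n with
  | O => Czero
  | S m => b * (Cone - b) * qpoch (a * p) p m * Ee p a b m * Bb p g (S m) * (- Cone) ^ S m * p ^ tri (S m)
           / (qpoch p p m * qpoch b p (S m) * qpoch (a * p * g) p m) end.

Lemma R1_term p a b g n :
  (forall k, qpoch p p k <> Czero) -> (forall k, qpoch b p k <> Czero) -> (forall k, qpoch (a * p * g) p k <> Czero) ->
  (Cone - b) * Tm p a b g n - (Cone - b * g) * Tm p a (b * p) g n = G1 p a b g n - G1 p a b g (S n).
Proof.
  intros Hqp Hqb Hqg.
  assert (Hb1 : Cone - b <> Czero).
  { intros E. apply (Hqb 1%nat). rewrite qpoch_S, qpoch_O. simpl. rewrite <- E. field. }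
  destruct n as [|m].
  - unfold Tm, G1, Den, Aa. rewrite !Ee_O, !Bb_O, !qpoch_O, Bb_S, Bb_O, !qpoch_S, !qpoch_O.
    simpl tri. simpl Cpow. field. split. exact Hb1. exact Cone_neq0.
  - assert (N1 := Hqp (S m)). assert (N2 := Hqb (S (S m))). assert (N3 := Hqg (S m)).
    assert (N4 := Hqp m). assert (N5 := Hqb (S m)). assert (N6 := Hqg m).
    unfold Tm, G1, Den, Aa.
    rewrite Ee_bp, (qpoch_bp b p (S m) Hb1), (Ee_S p a b m), (Bb_S p g (S m)), (neg1S (S m)), (pow_tri_S p (S m)).
    rewrite (qpoch_S b p (S m)) in *. rewrite (qpoch_S p p m) in *. rewrite (qpoch_S (a*p) p m).
    rewrite (qpoch_S (a*p*g) p m) in *. rewrite pow2S. rewrite !Cpow_S in *.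
    assert (M1 := Cmul_neq0_l _ _ N1). assert (M2 := Cmul_neq0_r _ _ N1).
    assert (M3 := Cmul_neq0_l _ _ N2). assert (M4 := Cmul_neq0_r _ _ N2).
    assert (M5 := Cmul_neq0_l _ _ N3). assert (M6 := Cmul_neq0_r _ _ N3).
    field. repeat split; assumption.
Qed.

Definition G2 p a g n := match n with
  | O => Czero
  | S m => (Cone - a * p * g) * g * qpoch (a * p) p m * Ee p a Czero (S m) * Bb p g m * (- Cone) ^ S m * p ^ tri (S m)
           / (qpoch p p m * qpoch Czero p (S m) * qpoch (a * p * g) p (S m)) end.

Lemma R2_term p a g n :
  (forall k, qpoch p p k <> Czero) -> (forall k, qpoch (a * p * g) p k <> Czero) ->
  (Cone - a * p * g) * Tm p a Czero g n - Tm p a Czero (g * p) n = G2 p a g n - G2 p a g (S n).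
Proof.
  intros Hqp Hqg.
  assert (Hg1 : Cone - a * p * g <> Czero).
  { intros E. apply (Hqg 1%nat). rewrite qpoch_S, qpoch_O. simpl. rewrite <- E. field. }
  assert (Eg : forall k, qpoch (a * p * (g * p)) p k = qpoch (a * p * g) p (S k) / (Cone - a * p * g)).
  { intros k. rewrite <- qpoch_bp by auto. apply qpoch_ext. field. }
  unfold Tm, Den. rewrite !Eg, !qpoch_zero.
  destruct n as [|m].
  - unfold G2, Aa. rewrite ?Ee_S, ?Bb_S, ?Ee_O, ?Bb_O, ?qpoch_S, ?qpoch_O, ?qpoch_zero.
    simpl tri. simpl Cpow. field. repeat split; try exact Hg1; try exact Cone_neq0.
  - assert (N1 := Hqp (S m)). assert (N2 := Hqg (S (S m))). assert (N3 := Hqg (S m)). assert (N4 := Hqp m).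
    unfold G2, Aa. rewrite !qpoch_zero.
    rewrite Bb_gp, (Bb_S p g m), (Ee_S p a Czero (S m)), (neg1S (S m)), (pow_tri_S p (S m)).
    rewrite (qpoch_S (a*p*g) p (S m)) in *. rewrite (qpoch_S p p m) in *. rewrite (qpoch_S (a*p) p m).
    rewrite pow2S. rewrite !Cpow_S in *.
    assert (M1 := Cmul_neq0_l _ _ N1). assert (M2 := Cmul_neq0_r _ _ N1).
    assert (M3 := Cmul_neq0_l _ _ N2). assert (M4 := Cmul_neq0_r _ _ N2).
    field. repeat split; try assumption; try exact Cone_neq0.
Qed.

Definition G3 p a n := match n with
  | O => Czero
  | S m => Cone * qpoch (a * p) p m * Ee p a Czero (S m) * Bb p Czero (S m) * (- Cone) ^ S m * p ^ tri (S m)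
           / qpoch p p m end.

Lemma R3_term p a n :
  (forall k, qpoch p p k <> Czero) ->
  Tm p a Czero Czero n - (Cone - a * p) * Tm p (a * p) Czero Czero n = G3 p a n - G3 p a (S n).
Proof.
  intros Hqp.
  assert (E1 : forall k, qpoch (a * p * Czero) p k = Cone).
  { intros k. rewrite <- (qpoch_zero p k). apply qpoch_ext. field. }
  assert (E2 : forall k, qpoch (a * p * p * Czero) p k = Cone).
  { intros k. rewrite <- (qpoch_zero p k). apply qpoch_ext. field. }
  unfold Tm, Den. rewrite !E1, !E2, !qpoch_zero.
  destruct n as [|[|m]].
  - unfold G3, Aa. rewrite ?Ee_S, ?Bb_S, ?Ee_O, ?Bb_O, ?qpoch_S, ?qpoch_O.
    simpl tri. simpl Cpow. field. repeat split; try exact Cone_neq0.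
  - assert (N1 : Cone - p <> Czero).
    { intros E. apply (Hqp 1%nat). rewrite qpoch_S, qpoch_O. simpl. rewrite <- E. field. }
    unfold G3, Aa. rewrite ?Ee_S, ?Bb_S, ?Ee_O, ?Bb_O, ?qpoch_S, ?qpoch_O.
    simpl tri. simpl Cpow.
    field. repeat split; try exact Cone_neq0; exact N1.
  - assert (N1 := Hqp (S (S m))). assert (N2 := Hqp (S m)).
    unfold G3, Aa.
    rewrite Ee_ap.
    rewrite (Ee_S p a Czero (S (S m))), (Bb_S p Czero (S (S m))), (neg1S (S (S m))), (pow_tri_S p (S (S m))).
    rewrite (qpoch_S (a*p) p (S m)). rewrite (qpoch_shift1 (a*p) p m). rewrite (qpoch_S (a*p*p) p m).
    rewrite (qpoch_S p p (S m)) in *.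
    rewrite !pow2S. rewrite !Cpow_S in *.
    assert (M1 := Cmul_neq0_l _ _ N1). assert (M2 := Cmul_neq0_r _ _ N1).
    field. repeat split; try assumption; try exact Cone_neq0.
Qed.

Lemma tri_to_zero (u : nat -> Cplx) (M K r : R) : (0 <= M)%R -> (0 <= K)%R -> (0 <= r < 1)%R ->
  (forall n, (Cnorm (u n) <= M * (K ^ n * r ^ tri n))%R) -> Cconv u Czero.
Proof.
  intros HM HK Hr H. destruct (tri_geom K r HK Hr) as [C0 [HC0 HC0']].
  apply Cconv_geom with (C0 := (M * C0)%R) (th := (1/2)%R). lra.
  intros n. replace (u n - Czero) with (u n) by field. eapply Rle_trans. apply H.
  rewrite Rmult_assoc. apply Rmult_le_compat_l; auto.
Qed.

Lemma pow_le_S (x : R) m : (1 <= x)%R -> (x ^ m <= x ^ S m)%R.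
Proof. intros H. apply Rle_pow; auto. Qed.

Lemma shape_bound (c X1 X2 X3 s t D : Cplx) (K1 K2 K3 d r : R) n :
  (0 <= K1)%R -> (0 <= K2)%R -> (0 <= K3)%R -> (0 < d)%R ->
  (Cnorm X1 <= K1 ^ n)%R -> (Cnorm X2 <= K2 ^ n)%R -> (Cnorm X3 <= K3 ^ n)%R ->
  Cnorm s = 1%R -> (Cnorm t <= r ^ tri n)%R -> (d <= Cnorm D)%R ->
  (Cnorm (c * X1 * X2 * X3 * s * t / D)%C <= Cnorm c / d * ((K1 * K2 * K3) ^ n * r ^ tri n))%R.
Proof.
  intros HK1 HK2 HK3 Hd H1 H2 H3 Hs Ht HD.
  assert (HDn : D <> Czero). { intros E. rewrite E, Cnorm_zero in HD. lra. }
  unfold Cdiv. rewrite !Cnorm_mult, Cnorm_inv by auto. rewrite Hs, !Rpow_mult_distr.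
  assert (P1 := Cnorm_ge0 X1). assert (P2 := Cnorm_ge0 X2). assert (P3 := Cnorm_ge0 X3). assert (Pt := Cnorm_ge0 t).
  assert (Pc := Cnorm_ge0 c).
  assert (HDi : (/ Cnorm D <= / d)%R) by (apply Rinv_le_contravar; lra).
  assert (HDi0 : (0 <= / Cnorm D)%R) by (left; apply Rinv_0_lt_compat; lra).
  assert (A : (Cnorm X1 * Cnorm X2 * Cnorm X3 * Cnorm t <= K1 ^ n * K2 ^ n * K3 ^ n * r ^ tri n)%R).
  { apply Rmult_le_compat. repeat apply Rmult_le_pos; auto. auto.
    apply Rmult_le_compat. apply Rmult_le_pos; auto. auto. apply Rmult_le_compat; auto. auto. auto. }
  assert (A0 : (0 <= Cnorm X1 * Cnorm X2 * Cnorm X3 * Cnorm t)%R) by (repeat apply Rmult_le_pos; auto).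
  replace (Cnorm c * Cnorm X1 * Cnorm X2 * Cnorm X3 * 1 * Cnorm t * / Cnorm D)%R
    with (Cnorm c * (Cnorm X1 * Cnorm X2 * Cnorm X3 * Cnorm t) * / Cnorm D)%R by ring.
  replace (Cnorm c / d * (K1 ^ n * K2 ^ n * K3 ^ n * r ^ tri n))%R
    with (Cnorm c * (K1 ^ n * K2 ^ n * K3 ^ n * r ^ tri n) * / d)%R by (unfold Rdiv; ring).
  apply Rmult_le_compat; auto. apply Rmult_le_pos; auto. apply Rmult_le_compat_l; auto.
Qed.

Lemma norm_prod3_lb (D1 D2 D3 : Cplx) (d1 d2 d3 : R) : (0 < d1)%R -> (0 < d2)%R -> (0 < d3)%R ->
  (d1 <= Cnorm D1)%R -> (d2 <= Cnorm D2)%R -> (d3 <= Cnorm D3)%R -> (d1 * d2 * d3 <= Cnorm (D1 * D2 * D3)%C)%R.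
Proof.
  intros. rewrite !Cnorm_mult. apply Rmult_le_compat; try lra. apply Rmult_le_pos; lra.
  apply Rmult_le_compat; lra.
Qed.

Lemma qpoch_bound_S x p m : (Cnorm p <= 1)%R -> (Cnorm (qpoch x p m) <= (1 + Cnorm x) ^ S m)%R.
Proof.
  intros H. eapply Rle_trans. apply qpoch_bound; auto. apply pow_le_S. assert (H0 := Cnorm_ge0 x). lra.
Qed.

Lemma Cnorm_tri p n : (Cnorm (p ^ tri n)%C <= Cnorm p ^ tri n)%R.
Proof. rewrite Cnorm_pow. lra. Qed.

Section Stages.
Variable p : Cplx.
Hypothesis Hp : (Cnorm p < 1)%R.
Lemma Hp1 : (Cnorm p <= 1)%R.
Proof. lra. Qed.
Lemma Hr : (0 <= Cnorm p < 1)%R.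
Proof. split. apply Cnorm_ge0. exact Hp. Qed.
Lemma Hqp : forall k, qpoch p p k <> Czero.
Proof. intros k. apply qpoch_neq0_small; auto. apply Hp1. Qed.

Lemma G1_to_zero a b g : (forall k, qpoch b p k <> Czero) -> (forall k, qpoch (a * p * g) p k <> Czero) ->
  Cconv (G1 p a b g) Czero.
Proof.
  intros Hb Hg.
  destruct (qpoch_lower p Hp p Hqp) as [c1 [Hc1 Hc1']].
  destruct (qpoch_lower p Hp b Hb) as [c2 [Hc2 Hc2']].
  destruct (qpoch_lower p Hp (a * p * g) Hg) as [c3 [Hc3 Hc3']].
  apply tri_to_zero with (M := (Cnorm (b * (Cone - b))%C / (c1 * c2 * c3))%R)
    (K := ((1 + Cnorm (a * p)%C) * (1 + (Cnorm b + Cnorm a)) * (Cnorm g + 1))%R) (r := Cnorm p).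
  - apply Rmult_le_pos. apply Cnorm_ge0. left. apply Rinv_0_lt_compat. repeat apply Rmult_lt_0_compat; auto.
  - assert (H1 := Cnorm_ge0 (a*p)). assert (H2 := Cnorm_ge0 b). assert (H3 := Cnorm_ge0 a). assert (H4 := Cnorm_ge0 g).
    repeat apply Rmult_le_pos; lra.
  - apply Hr.
  - intros [|m].
    + simpl. rewrite Cnorm_zero. assert (0 <= Cnorm (b * (Cone - b))%C / (c1 * c2 * c3))%R.
      { apply Rmult_le_pos. apply Cnorm_ge0. left. apply Rinv_0_lt_compat. repeat apply Rmult_lt_0_compat; auto. }
      simpl. lra.
    + unfold G1. 
      assert (H2 := Cnorm_ge0 b). assert (H3 := Cnorm_ge0 a). assert (H4 := Cnorm_ge0 g). assert (H1 := Cnorm_ge0 (a*p)).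
      apply shape_bound.
      * lra.
      * lra.
      * lra.
      * repeat apply Rmult_lt_0_compat; auto.
      * apply qpoch_bound_S. apply Hp1.
      * eapply Rle_trans. apply Ee_bound. apply Hp1. eapply Rle_trans. apply pow_incr with (y := (1 + (Cnorm b + Cnorm a))%R). lra. apply pow_le_S. lra.
      * apply Bb_bound. apply Hp1.
      * apply Cnorm_neg1_pow.
      * apply Cnorm_tri.
      * apply norm_prod3_lb; auto.
Qed.
Lemma Cnorm_qpoch_zero_lb n : (1 <= Cnorm (qpoch Czero p n))%R.
Proof. rewrite qpoch_zero, Cnorm_one. lra. Qed.

Lemma G2_to_zero a g : (forall k, qpoch (a * p * g) p k <> Czero) -> Cconv (G2 p a g) Czero.
Proof.
  intros Hg.
  destruct (qpoch_lower p Hp p Hqp) as [c1 [Hc1 Hc1']].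
  destruct (qpoch_lower p Hp (a * p * g) Hg) as [c3 [Hc3 Hc3']].
  assert (H2 := Cnorm_ge0 Czero). assert (H3 := Cnorm_ge0 a). assert (H4 := Cnorm_ge0 g). assert (H1 := Cnorm_ge0 (a*p)).
  apply tri_to_zero with (M := (Cnorm ((Cone - a * p * g) * g)%C / (c1 * 1 * c3))%R)
    (K := ((1 + Cnorm (a * p)%C) * (Cnorm Czero + Cnorm a) * (Cnorm g + 1))%R) (r := Cnorm p).
  - apply Rmult_le_pos. apply Cnorm_ge0. left. apply Rinv_0_lt_compat. repeat apply Rmult_lt_0_compat; lra.
  - repeat apply Rmult_le_pos; lra.
  - apply Hr.
  - intros [|m].
    + simpl. rewrite Cnorm_zero. assert (0 <= Cnorm ((Cone - a * p * g) * g)%C / (c1 * 1 * c3))%R.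
      { apply Rmult_le_pos. apply Cnorm_ge0. left. apply Rinv_0_lt_compat. repeat apply Rmult_lt_0_compat; lra. }
      simpl. lra.
    + unfold G2. apply shape_bound.
      * lra.
      * lra.
      * lra.
      * repeat apply Rmult_lt_0_compat; lra.
      * apply qpoch_bound_S. apply Hp1.
      * apply Ee_bound. apply Hp1.
      * eapply Rle_trans. apply Bb_bound. apply Hp1. apply pow_le_S. lra.
      * apply Cnorm_neg1_pow.
      * apply Cnorm_tri.
      * apply norm_prod3_lb; auto; try lra. apply Cnorm_qpoch_zero_lb.
Qed.

Lemma G3_to_zero a : Cconv (G3 p a) Czero.
Proof.
  destruct (qpoch_lower p Hp p Hqp) as [c1 [Hc1 Hc1']].
  assert (H2 := Cnorm_ge0 Czero). assert (H3 := Cnorm_ge0 a). assert (H1 := Cnorm_ge0 (a*p)).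
  apply tri_to_zero with (M := (Cnorm Cone / c1)%R)
    (K := ((1 + Cnorm (a * p)%C) * (Cnorm Czero + Cnorm a) * (Cnorm Czero + 1))%R) (r := Cnorm p).
  - apply Rmult_le_pos. apply Cnorm_ge0. left. apply Rinv_0_lt_compat. lra.
  - repeat apply Rmult_le_pos; lra.
  - apply Hr.
  - intros [|m].
    + simpl. rewrite Cnorm_zero. assert (0 <= Cnorm Cone / c1)%R.
      { apply Rmult_le_pos. apply Cnorm_ge0. left. apply Rinv_0_lt_compat. lra. }
      simpl. lra.
    + unfold G3. apply shape_bound.
      * lra.
      * lra.
      * lra.
      * lra.
      * apply qpoch_bound_S. apply Hp1.
      * apply Ee_bound. apply Hp1.
      * apply Bb_bound. apply Hp1.
      * apply Cnorm_neg1_pow.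
      * apply Cnorm_tri.
      * auto.
Qed.

Lemma Tm_geom (Ra Rb Rg cb cg : R) : (0 <= Ra)%R -> (0 <= Rb)%R -> (0 <= Rg)%R -> (0 < cb)%R -> (0 < cg)%R ->
  exists C0, (0 <= C0)%R /\ forall a b g, (Cnorm a <= Ra)%R -> (Cnorm b <= Rb)%R -> (Cnorm g <= Rg)%R ->
    (forall n, (cb <= Cnorm (qpoch b p n))%R) -> (forall n, (cg <= Cnorm (qpoch (a * p * g)%C p n))%R) ->
    forall n, (Cnorm (Tm p a b g n) <= C0 * (1/2) ^ n)%R.
Proof.
  intros HRa HRb HRg Hcb Hcg.
  destruct (qpoch_lower p Hp p Hqp) as [c1 [Hc1 Hc1']].
  set (K := ((1 + Ra) * (Rb + Ra) * (Rg + 1))%R).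
  assert (HK : (0 <= K)%R) by (unfold K; repeat apply Rmult_le_pos; lra).
  destruct (tri_geom K (Cnorm p) HK Hr) as [C0 [HC0 HC0']].
  exists (C0 / (c1 * cb * cg))%R. split.
  { apply Rmult_le_pos; auto. left. apply Rinv_0_lt_compat. repeat apply Rmult_lt_0_compat; auto. }
  intros a b g Ha Hb Hg Hb' Hg' n.
  eapply Rle_trans. apply Tm_bound with (Ra := Ra) (Rb := Rb) (Rg := Rg) (cp := c1) (cb := cb) (cg := cg); auto.
  fold K. specialize (HC0' n).
  assert (0 < / (c1 * cb * cg))%R by (apply Rinv_0_lt_compat; repeat apply Rmult_lt_0_compat; auto).
  apply Rle_trans with (C0 * (1/2) ^ n / (c1 * cb * cg))%R.
  unfold Rdiv. apply Rmult_le_compat_r; lra. right. unfold Rdiv. ring.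
Qed.

End Stages.

Lemma rel_tele f1 f2 (al be : Cplx) G L1 L2 : Cseries f1 L1 -> Cseries f2 L2 ->
  (forall n, al * f1 n - be * f2 n = G n - G (S n)) -> G O = Czero -> Cconv G Czero -> al * L1 = be * L2.
Proof.
  intros H1 H2 HG HG0 HGc.
  assert (S1 := Cseries_add _ _ _ _ (Cseries_scal al _ _ H1) (Cseries_scal (- be) _ _ H2)).
  assert (S2 := Cseries_telescope _ G (fun n => eq_refl) HGc).
  assert (S3 : Cseries (fun n => G n - G (S n)) (al * L1 + - be * L2)).
  { apply Cseries_ext with (2 := S1). intros n. rewrite <- HG. field. }
  assert (E := Cseries_unique _ _ _ S2 S3). rewrite HG0 in E.
  transitivity (al * L1 + - be * L2 + be * L2). field. rewrite <- E. field.
Qed.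

Lemma series_exists f (C0 : R) : (0 <= C0)%R -> (forall n, (Cnorm (f n) <= C0 * (1/2) ^ n)%R) -> Cseries f (csum f).
Proof.
  intros HC H. apply csum_spec. destruct (Cseries_geom f C0 (1/2) HC) as [L [HL _]]. lra. auto. exists L; auto.
Qed.

Lemma engine (F : nat -> nat -> Cplx) (gl : nat -> Cplx) (Lfin PU PV : Cplx) (C0 : R) (u v : nat -> Cplx) :
  (0 <= C0)%R ->
  (forall j n, (Cnorm (F j n) <= C0 * (1/2) ^ n)%R) ->
  (forall n, Cconv (fun j => F j n) (gl n)) ->
  Cseries gl Lfin ->
  (forall j, u j * csum (F j) = v j * csum (F (S j))) ->
  Cconv (prodC u) PU -> Cconv (prodC v) PV -> PU <> Czero ->
  Cseries (F O) (PV * Lfin / PU).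
Proof.
  intros HC Hb Hpt Hgl Hrel HU HV HPU.
  assert (Hser : forall j, Cseries (F j) (csum (F j))) by (intros j; apply series_exists with C0; auto).
  destruct (Tannery F gl C0 (1/2) (fun j => csum (F j)) HC ltac:(lra) Hpt Hb Hser) as [L' [HL' HLc]].
  rewrite <- (Cseries_unique _ _ _ HL' Hgl) in *.
  assert (Hit : forall j, prodC u j * csum (F O) = prodC v j * csum (F j)).
  { induction j. simpl. field. rewrite !prodC_S.
    transitivity (prodC u j * csum (F O) * u j). field. rewrite IHj.
    transitivity (prodC v j * (u j * csum (F j))). field. rewrite Hrel. field. }
  assert (C1 : Cconv (fun j => prodC u j * csum (F O)) (PU * csum (F O))).
  { apply Cconv_mult; auto. apply Cconv_const. }
  assert (C2 : Cconv (fun j => prodC u j * csum (F O)) (PV * L')).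
  { apply Cconv_ext with (fun j => prodC v j * csum (F j)). intros j. auto. apply Cconv_mult; auto. }
  assert (E := Cconv_unique _ _ _ C1 C2).
  replace (PV * L' / PU) with (csum (F O)). apply Hser.
  transitivity (PU * csum (F O) / PU). field. auto. rewrite E. reflexivity.
Qed.

Lemma prodC_one n : prodC (fun _ => Cone) n = Cone.
Proof. induction n. reflexivity. rewrite prodC_S, IHn. field. Qed.

Lemma Cconv_prodC_one : Cconv (prodC (fun _ => Cone)) Cone.
Proof. apply Cconv_ext with (fun _ => Cone). intros n. rewrite prodC_one. reflexivity. apply Cconv_const. Qed.

Lemma qinf_prodC x p P : qinf x p P -> Cconv (prodC (fun i => Cone - x * p ^ i)) P.
Proof. intros H. apply Cconv_ext with (qpoch x p). intros n. apply qpoch_prodC. exact H. Qed.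

Lemma Tm_ext p a1 a2 b1 b2 g1 g2 : a1 = a2 -> b1 = b2 -> g1 = g2 -> Tm p a1 b1 g1 = Tm p a2 b2 g2.
Proof. intros -> -> ->. reflexivity. Qed.

Lemma Tm_zero_tail p n : (n >= 1)%nat -> Tm p Czero Czero Czero n = Czero.
Proof.
  intros Hn. destruct n. lia. unfold Tm. rewrite Ee_S. unfold Cdiv.
  replace (Czero - Czero * p ^ S n) with Czero by field. ring.
Qed.

Lemma Tm_zero_0 p a b g : Tm p a b g O = Cone.
Proof. unfold Tm, Den, Aa. rewrite Ee_O, Bb_O, !qpoch_O. simpl. field. exact Cone_neq0. Qed.

Section Stages2.
Variable p : Cplx.
Hypothesis Hp : (Cnorm p < 1)%R.

Lemma norm_mul_pow_le x j : (Cnorm (x * p ^ j)%C <= Cnorm x)%R.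
Proof.
  rewrite Cnorm_mult. assert (H := norm_pow_le1 p j (Hp1 p Hp)). assert (H0 := Cnorm_ge0 x). nra.
Qed.

Lemma qpoch_times_zero x k : qpoch (x * Czero) p k = Cone.
Proof. rewrite <- (qpoch_zero p k). apply qpoch_ext. field. Qed.

Lemma stage3 a P : qinf (a * p) p P -> Cseries (Tm p a Czero Czero) P.
Proof.
  intros HP.
  destruct (Tm_geom p Hp (Cnorm a) 0 0 1 1) as [C0 [HC0 HC0']]; try lra. apply Cnorm_ge0.
  assert (Hb : forall j n, (Cnorm (Tm p (a * p ^ j)%C Czero Czero n) <= C0 * (1/2) ^ n)%R).
  { intros j n. apply HC0'.
    - apply norm_mul_pow_le.
    - rewrite Cnorm_zero. lra.
    - rewrite Cnorm_zero. lra.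
    - intros k. rewrite qpoch_zero, Cnorm_one. lra.
    - intros k. rewrite qpoch_times_zero, Cnorm_one. lra. }
  assert (Hpt : forall n, Cconv (fun j => Tm p (a * p ^ j) Czero Czero n) (Tm p Czero Czero Czero n)).
  { intros n. apply Cconv_Tm.
    - replace Czero with (a * Czero) by field. apply Cconv_mult. apply Cconv_const. apply Cconv_pow_zero; auto.
    - apply Cconv_const.
    - apply Cconv_const.
    - unfold Den. rewrite qpoch_zero, qpoch_times_zero. apply Cmul_neq0. apply Cmul_neq0.
      apply Hqp; auto. exact Cone_neq0. exact Cone_neq0. }
  assert (Hgl : Cseries (Tm p Czero Czero Czero) Cone).
  { replace Cone with (Csum (Tm p Czero Czero Czero) 1). apply Cseries_finite. apply Tm_zero_tail.
    simpl. rewrite Tm_zero_0. field. }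
  assert (H := engine (fun j n => Tm p (a * p ^ j) Czero Czero n) (Tm p Czero Czero Czero) Cone Cone P C0
    (fun _ => Cone) (fun i => Cone - a * p * p ^ i) HC0 Hb Hpt Hgl).
  assert (H' : Cseries (fun n => Tm p (a * p ^ 0) Czero Czero n) (P * Cone / Cone)).
  { apply H.
    - intros j. 
      assert (E : (fun n => Tm p (a * p ^ S j) Czero Czero n) = Tm p (a * p ^ j * p) Czero Czero).
      { apply Tm_ext; auto. rewrite Cpow_S. field. }
      rewrite E.
      replace (Cone - a * p * p ^ j) with (Cone - a * p ^ j * p) by field.
      assert (S1 : Cseries (Tm p (a * p ^ j) Czero Czero) (csum (Tm p (a * p ^ j) Czero Czero))).
      { apply (series_exists _ C0); auto. }
      assert (S2 : Cseries (Tm p (a * p ^ j * p) Czero Czero) (csum (Tm p (a * p ^ j * p) Czero Czero))).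
      { apply (series_exists _ C0); auto. intros n. rewrite <- E. apply (Hb (S j) n). }
      apply (rel_tele _ _ _ _ (G3 p (a * p ^ j)) _ _ S1 S2).
      + intros n. rewrite <- R3_term. field. apply Hqp; auto.
      + reflexivity.
      + apply G3_to_zero; auto.
    - apply Cconv_prodC_one.
    - apply qinf_prodC. exact HP.
    - exact Cone_neq0. }
  replace (P * Cone / Cone) with P in H' by (field; exact Cone_neq0).
  apply Cseries_ext with (2 := H'). intros n. f_equal. simpl. field.
Qed.

Lemma qpoch_apg_shift a g j k : qpoch (a * p * (g * p ^ j)) p k = qpoch (a * p * g * p ^ j) p k.
Proof. apply qpoch_ext. field. Qed.

Lemma stage2 a g P1 P2 : (forall k, qpoch (a * p * g) p k <> Czero) ->
  qinf (a * p) p P1 -> qinf (a * p * g) p P2 -> Cseries (Tm p a Czero g) (P1 / P2).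
Proof.
  intros Hg HP1 HP2.
  destruct (qpoch_shift_lower p Hp (a * p * g) Hg) as [cg [Hcg Hcg']].
  destruct (Tm_geom p Hp (Cnorm a) 0 (Cnorm g) 1 cg) as [C0 [HC0 HC0']]; try lra; try apply Cnorm_ge0; auto.
  assert (Hb : forall j n, (Cnorm (Tm p a Czero (g * p ^ j)%C n) <= C0 * (1/2) ^ n)%R).
  { intros j n. apply HC0'.
    - lra.
    - rewrite Cnorm_zero. lra.
    - apply norm_mul_pow_le.
    - intros k. rewrite qpoch_zero, Cnorm_one. lra.
    - intros k. rewrite qpoch_apg_shift. apply Hcg'. }
  assert (Hpt : forall n, Cconv (fun j => Tm p a Czero (g * p ^ j) n) (Tm p a Czero Czero n)).
  { intros n. apply Cconv_Tm.
    - apply Cconv_const.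
    - apply Cconv_const.
    - replace Czero with (g * Czero) by field. apply Cconv_mult. apply Cconv_const. apply Cconv_pow_zero; auto.
    - unfold Den. rewrite qpoch_zero, qpoch_times_zero. apply Cmul_neq0. apply Cmul_neq0.
      apply Hqp; auto. exact Cone_neq0. exact Cone_neq0. }
  assert (Hgl := stage3 a P1 HP1).
  assert (H := engine (fun j n => Tm p a Czero (g * p ^ j) n) (Tm p a Czero Czero) P1 P2 Cone C0
    (fun i => Cone - a * p * g * p ^ i) (fun _ => Cone) HC0 Hb Hpt Hgl).
  assert (HP2n : P2 <> Czero) by (apply (qinf_neq0 p Hp (a * p * g)); auto).
  assert (H' : Cseries (fun n => Tm p a Czero (g * p ^ 0) n) (Cone * P1 / P2)).
  { apply H.
    - intros j.
      assert (E : (fun n => Tm p a Czero (g * p ^ S j) n) = Tm p a Czero (g * p ^ j * p)).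
      { apply Tm_ext; auto. rewrite Cpow_S. field. }
      rewrite E.
      replace (Cone - a * p * g * p ^ j) with (Cone - a * p * (g * p ^ j)) by field.
      replace (Cone * csum (Tm p a Czero (g * p ^ j * p))) with (Cone * csum (Tm p a Czero (g * p ^ j * p))) by reflexivity.
      assert (S1 : Cseries (Tm p a Czero (g * p ^ j)) (csum (Tm p a Czero (g * p ^ j)))).
      { apply (series_exists _ C0); auto. }
      assert (S2 : Cseries (Tm p a Czero (g * p ^ j * p)) (csum (Tm p a Czero (g * p ^ j * p)))).
      { apply (series_exists _ C0); auto. intros n. rewrite <- E. apply (Hb (S j) n). }
      apply (rel_tele _ _ _ _ (G2 p a (g * p ^ j)) _ _ S1 S2).
      + intros n. rewrite <- R2_term. field. apply Hqp; auto.
        intros k. rewrite qpoch_apg_shift. apply qpoch_shift_neq0; auto.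
      + reflexivity.
      + apply G2_to_zero; auto. intros k. rewrite qpoch_apg_shift. apply qpoch_shift_neq0; auto.
    - apply qinf_prodC. exact HP2.
    - apply Cconv_prodC_one.
    - exact HP2n. }
  replace (Cone * P1 / P2) with (P1 / P2) in H' by (field; auto).
  apply Cseries_ext with (2 := H'). intros n. f_equal. simpl. field.
Qed.

Lemma stage1 a b g P1 P2 P3 P4 : (forall k, qpoch b p k <> Czero) -> (forall k, qpoch (a * p * g) p k <> Czero) ->
  qinf (a * p) p P1 -> qinf (b * g) p P2 -> qinf b p P3 -> qinf (a * p * g) p P4 ->
  Cseries (Tm p a b g) (P1 * P2 / (P3 * P4)).
Proof.
  intros Hbz Hg HP1 HP2 HP3 HP4.
  destruct (qpoch_shift_lower p Hp b Hbz) as [cb [Hcb Hcb']].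
  destruct (qpoch_lower p Hp (a * p * g) Hg) as [cg [Hcg Hcg']].
  destruct (Tm_geom p Hp (Cnorm a) (Cnorm b) (Cnorm g) cb cg) as [C0 [HC0 HC0']]; try lra; try apply Cnorm_ge0; auto.
  assert (Hb : forall j n, (Cnorm (Tm p a (b * p ^ j)%C g n) <= C0 * (1/2) ^ n)%R).
  { intros j n. apply HC0'.
    - lra.
    - apply norm_mul_pow_le.
    - lra.
    - intros k. apply Hcb'.
    - intros k. apply Hcg'. }
  assert (Hpt : forall n, Cconv (fun j => Tm p a (b * p ^ j) g n) (Tm p a Czero g n)).
  { intros n. apply Cconv_Tm.
    - apply Cconv_const.
    - replace Czero with (b * Czero) by field. apply Cconv_mult. apply Cconv_const. apply Cconv_pow_zero; auto.
    - apply Cconv_const.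
    - unfold Den. rewrite qpoch_zero. apply Cmul_neq0. apply Cmul_neq0.
      apply Hqp; auto. exact Cone_neq0. auto. }
  assert (HP3n : P3 <> Czero) by (apply (qinf_neq0 p Hp b); auto).
  assert (HP4n : P4 <> Czero) by (apply (qinf_neq0 p Hp (a * p * g)); auto).
  assert (Hgl := stage2 a g P1 P4 Hg HP1 HP4).
  assert (H := engine (fun j n => Tm p a (b * p ^ j) g n) (Tm p a Czero g) (P1 / P4) P3 P2 C0
    (fun i => Cone - b * p ^ i) (fun i => Cone - b * g * p ^ i) HC0 Hb Hpt Hgl).
  assert (H' : Cseries (fun n => Tm p a (b * p ^ 0) g n) (P2 * (P1 / P4) / P3)).
  { apply H.
    - intros j.
      assert (E : (fun n => Tm p a (b * p ^ S j) g n) = Tm p a (b * p ^ j * p) g).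
      { apply Tm_ext; auto. rewrite Cpow_S. field. }
      rewrite E.
      replace (Cone - b * g * p ^ j) with (Cone - b * p ^ j * g) by field.
      assert (S1 : Cseries (Tm p a (b * p ^ j) g) (csum (Tm p a (b * p ^ j) g))).
      { apply (series_exists _ C0); auto. }
      assert (S2 : Cseries (Tm p a (b * p ^ j * p) g) (csum (Tm p a (b * p ^ j * p) g))).
      { apply (series_exists _ C0); auto. intros n. rewrite <- E. apply (Hb (S j) n). }
      apply (rel_tele _ _ _ _ (G1 p a (b * p ^ j) g) _ _ S1 S2).
      + intros n. rewrite <- R1_term; auto. apply Hqp; auto.
        intros k. apply qpoch_shift_neq0; auto.
      + reflexivity.
      + apply G1_to_zero; auto. intros k. apply qpoch_shift_neq0; auto.
    - apply qinf_prodC. exact HP3.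
    - apply qinf_prodC. exact HP2.
    - exact HP3n. }
  replace (P2 * (P1 / P4) / P3) with (P1 * P2 / (P3 * P4)) in H' by (field; auto).
  apply Cseries_ext with (2 := H'). intros n. f_equal. simpl. field.
Qed.
End Stages2.

Lemma Ee_zero p a n : Ee p a Czero n = (- Cone) ^ n * a ^ n * p ^ n * p ^ (tri n).
Proof.
  induction n. rewrite Ee_O. simpl. field.
  rewrite Ee_S, IHn, pow_tri_S. rewrite !Cpow_S. field.
Qed.
Lemma Bb_zero p n : Bb p Czero n = (- Cone) ^ n * p ^ (tri n).
Proof.
  induction n. rewrite Bb_O. simpl. field.
  rewrite Bb_S, IHn, pow_tri_S. rewrite !Cpow_S. field.
Qed.
Lemma Ee_lin p a b c x n : (forall i, b - a * p ^ S i = c * (Cone - x * p ^ i)) -> Ee p a b n = c ^ n * qpoch x p n.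
Proof.
  intros H. induction n. rewrite Ee_O. simpl. field.
  rewrite Ee_S, IHn, qpoch_S, H. rewrite Cpow_S. field.
Qed.
Lemma Bb_lin p g c x n : (forall i, g - p ^ i = c * (Cone - x * p ^ i)) -> Bb p g n = c ^ n * qpoch x p n.
Proof.
  intros H. induction n. rewrite Bb_O. simpl. field.
  rewrite Bb_S, IHn, qpoch_S, H. rewrite Cpow_S. field.
Qed.
Lemma Aa_eq p a n : Cone - a <> Czero -> Aa p a n = (Cone - a * p ^ (2 * n)) * qpoch a p n / (Cone - a).
Proof.
  intros H. destruct n.
  - simpl. field. auto.
  - unfold Aa. rewrite qpoch_shift1. field. auto.
Qed.
Lemma qpoch_sq x p n : qpoch x p n * qpoch (- x) p n = qpoch (x * x) (p * p) n.
Proof.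
  induction n. simpl. field.
  rewrite !qpoch_S, <- IHn, Cpow_mult_distr. field.
Qed.
Lemma qpoch_double x q n : qpoch x q (2 * n) = qpoch x (q * q) n * qpoch (x * q) (q * q) n.
Proof.
  induction n. simpl. field.
  replace (2 * S n)%nat with (S (S (2 * n))) by lia.
  rewrite !qpoch_S, IHn, Cpow_mult_distr. rewrite Cpow_S.
  replace (2 * n)%nat with (n + n)%nat by lia. rewrite Cpow_add. field.
Qed.
Lemma Cpow_inv q n : q <> Czero -> (Cinv q) ^ n = Cinv (q ^ n).
Proof.
  intros H. induction n. simpl. field. exact Cone_neq0. rewrite !Cpow_S, IHn. field. split; auto. apply Cpow_neq0; auto.
Qed.
Lemma tri_double n : (2 * tri n = n * (n - 1))%nat.
Proof. induction n. reflexivity. simpl tri. destruct n. reflexivity. nia. Qed.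
Lemma exp1 n : (n * (3 * n - 1) / 2 = n + tri n + tri n + tri n)%nat.
Proof.
  assert (H := tri_double n).
  replace (n * (3 * n - 1))%nat with ((n + tri n + tri n + tri n) * 2)%nat by (destruct n; nia).
  apply Nat.div_mul. lia.
Qed.
Lemma exp2 n : (2 * n * n - n = n + tri n + tri n + tri n + tri n)%nat.
Proof. assert (H := tri_double n). destruct n; nia. Qed.
Lemma exp3 n : (n * n = n + tri n + tri n)%nat.
Proof. assert (H := tri_double n). destruct n; nia. Qed.
Lemma exp4 n : (n * n - n = tri n + tri n)%nat.
Proof. assert (H := tri_double n). destruct n; nia. Qed.

Lemma qinf_zero p : qinf Czero p Cone.
Proof. apply Cconv_ext with (fun _ => Cone). intros n. rewrite qpoch_zero. reflexivity. apply Cconv_const. Qed.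
Lemma qinf_ext x y p P : x = y -> qinf x p P -> qinf y p P.
Proof. intros ->. auto. Qed.

Lemma Cone_sub_neq (k : Cplx) : k <> Cone -> Cone - k <> Czero.
Proof. intros H E. apply H. transitivity (Cone - (Cone - k)). field. rewrite E. field. Qed.

Lemma norm_q2 q : (Cnorm q < 1)%R -> (Cnorm (q * q)%C < 1)%R.
Proof. intros H. rewrite Cnorm_mult. assert (H0 := Cnorm_ge0 q). nra. Qed.

Lemma id1 q k : (Cnorm q < 1)%R -> k <> Cone ->
  exists P : Cplx, qinf (k * q) q P /\
     Cseries (fun n => (Cone - k * q ^ (2 * n)) * qpoch k q n
                        / ((Cone - k) * qpoch q q n)
                        * (- Cone) ^ n * k ^ n * q ^ (n * (3 * n - 1) / 2)) P.
Proof.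
  intros hq hk. destruct (qpoch_exists q hq (k * q)) as [P HP]. exists P. split; auto.
  assert (H := stage3 q hq k P HP). apply Cseries_ext with (2 := H).
  intros n. assert (Hk := Cone_sub_neq k hk). assert (Hqq := Hqp q hq n).
  unfold Tm, Den. rewrite qpoch_zero, qpoch_times_zero, Ee_zero, Bb_zero, (Aa_eq q k n Hk), exp1, !Cpow_add.
  transitivity (((- Cone) ^ n * (- Cone) ^ n) * ((Cone - k * q ^ (2 * n)) * qpoch k q n / ((Cone - k) * qpoch q q n) *
     (- Cone) ^ n * k ^ n * (q ^ n * q ^ tri n * q ^ tri n * q ^ tri n))).
  field. repeat split; auto; try exact Cone_neq0.
  rewrite Cneg1_sq. field. split; auto.
Qed.

Lemma Cpow2 (q : Cplx) : q ^ 2 = q * q.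
Proof. simpl. field. Qed.
Lemma Cpow4 (q : Cplx) : q ^ 4 = q ^ 2 * q ^ 2.
Proof. simpl. field. Qed.
Lemma Cpow_opp (z : Cplx) n : (- z) ^ n = (- Cone) ^ n * z ^ n.
Proof. induction n. simpl. field. rewrite !Cpow_S, IHn. field. Qed.
Lemma Cpow2_pow (q : Cplx) m : (q ^ 2) ^ m = q ^ m * q ^ m.
Proof. rewrite Cpow2, Cpow_mult_distr. reflexivity. Qed.
Lemma norm_qpow2 q : (Cnorm q < 1)%R -> (Cnorm (q ^ 2) < 1)%R.
Proof. intros H. rewrite Cpow2. apply norm_q2; auto. Qed.
Lemma qpoch_p_neq0 q n : (Cnorm q < 1)%R -> qpoch q q n <> Czero.
Proof. intros H. apply Hqp; auto. Qed.
Lemma qpoch_small_neq0 x p n : (Cnorm x < 1)%R -> (Cnorm p < 1)%R -> qpoch x p n <> Czero.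
Proof. intros. apply qpoch_neq0_small; lra. Qed.

Lemma id2 q k : (Cnorm q < 1)%R -> k <> Cone ->
  ((forall n, qpoch (- (k * q)) (q ^ 2) n <> Czero) ->
   exists P1 P2 : Cplx, qinf (k * q ^ 2) (q ^ 2) P1 /\ qinf (- (k * q)) (q ^ 2) P2 /\
     Cseries (fun n => (Cone - k * q ^ (4 * n)) * qpoch (- q) (q ^ 2) n * qpoch k (q ^ 2) n
                        / ((Cone - k) * qpoch (- (k * q)) (q ^ 2) n * qpoch (q ^ 2) (q ^ 2) n)
                        * (- Cone) ^ n * k ^ n * q ^ (2 * n * n - n)) (P1 / P2)).
Proof.
  intros hq hk hnz. assert (hp := norm_qpow2 q hq).
  destruct (qpoch_exists (q ^ 2) hp (k * q ^ 2)) as [P1 HP1].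
  destruct (qpoch_exists (q ^ 2) hp (- (k * q))) as [P2 HP2].
  exists P1, P2. split; auto. split; auto.
  assert (Hz1 : qinf (- (k * q) * Czero) (q ^ 2) Cone) by (apply qinf_ext with Czero; [field | apply qinf_zero]).
  assert (Hz2 : qinf (k * q ^ 2 * Czero) (q ^ 2) Cone) by (apply qinf_ext with Czero; [field | apply qinf_zero]).
  assert (Hg0 : forall j, qpoch (k * q ^ 2 * Czero) (q ^ 2) j <> Czero) by (intros j; rewrite qpoch_times_zero; exact Cone_neq0).
  assert (H := stage1 (q ^ 2) hp k (- (k * q)) Czero P1 Cone P2 Cone hnz Hg0 HP1 Hz1 HP2 Hz2).
  assert (HP2n : P2 <> Czero) by (apply (qinf_neq0 _ hp _ _ hnz HP2)).
  replace (P1 * Cone / (P2 * Cone)) with (P1 / P2) in H by (field; repeat split; auto; try exact Cone_neq0).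
  apply Cseries_ext with (2 := H).
  intros n. assert (Hk := Cone_sub_neq k hk). assert (Hqq := qpoch_p_neq0 (q ^ 2) n hp). assert (Hb := hnz n).
  unfold Tm, Den. rewrite qpoch_times_zero, Bb_zero, (Aa_eq _ k n Hk).
  rewrite (Ee_lin (q ^ 2) k (- (k * q)) (- (k * q)) (- q) n).
  2:{ intros i. rewrite Cpow_S, Cpow2. field. }
  rewrite exp2. replace (q ^ (4 * n)) with (q ^ n * q ^ n * (q ^ n * q ^ n))
    by (replace (4 * n)%nat with ((n + n) + (n + n))%nat by lia; rewrite !Cpow_add; reflexivity).
  replace (2 * n)%nat with (n + n)%nat by lia.
  rewrite !Cpow_add, Cpow_opp, Cpow_mult_distr, !Cpow2_pow.
  transitivity (((- Cone) ^ n * (- Cone) ^ n) * ((Cone - k * (q ^ n * q ^ n * (q ^ n * q ^ n))) * qpoch (- q) (q ^ 2) n * qpoch k (q ^ 2) n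
        / ((Cone - k) * qpoch (- (k * q)) (q ^ 2) n * qpoch (q ^ 2) (q ^ 2) n)
        * (- Cone) ^ n * k ^ n * (q ^ n * q ^ tri n * q ^ tri n * q ^ tri n * q ^ tri n))).
  field. repeat split; auto; try exact Cone_neq0.
  rewrite Cneg1_sq. field. repeat split; auto.
Qed.

Lemma id3 q k : (Cnorm q < 1)%R -> k <> Cone ->
  ((forall n, qpoch (- (k * q)) q n <> Czero) ->
   exists P1 P2 : Cplx, qinf (k * q) q P1 /\ qinf (- (k * q)) q P2 /\
     Cseries (fun n => (Cone - k * q ^ (2 * n)) * qpoch (- Cone) q n * qpoch k q n
                        / ((Cone - k) * qpoch (- (k * q)) q n * qpoch q q n)
                        * (- Cone) ^ n * k ^ n * q ^ (n * n)) (P1 / P2)).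
Proof.
  intros hq hk hnz.
  destruct (qpoch_exists q hq (k * q)) as [P1 HP1].
  destruct (qpoch_exists q hq (- (k * q))) as [P2 HP2].
  exists P1, P2. split; auto. split; auto.
  assert (Hz1 : qinf (- (k * q) * Czero) q Cone) by (apply qinf_ext with Czero; [field | apply qinf_zero]).
  assert (Hz2 : qinf (k * q * Czero) q Cone) by (apply qinf_ext with Czero; [field | apply qinf_zero]).
  assert (Hg0 : forall j, qpoch (k * q * Czero) q j <> Czero) by (intros j; rewrite qpoch_times_zero; exact Cone_neq0).
  assert (H := stage1 q hq k (- (k * q)) Czero P1 Cone P2 Cone hnz Hg0 HP1 Hz1 HP2 Hz2).
  assert (HP2n : P2 <> Czero) by (apply (qinf_neq0 _ hq _ _ hnz HP2)).
  replace (P1 * Cone / (P2 * Cone)) with (P1 / P2) in H by (field; repeat split; auto; try exact Cone_neq0).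
  apply Cseries_ext with (2 := H).
  intros n. assert (Hk := Cone_sub_neq k hk). assert (Hqq := qpoch_p_neq0 q n hq). assert (Hb := hnz n).
  unfold Tm, Den. rewrite qpoch_times_zero, Bb_zero, (Aa_eq _ k n Hk).
  rewrite (Ee_lin q k (- (k * q)) (- (k * q)) (- Cone) n).
  2:{ intros i. rewrite Cpow_S. field. }
  rewrite exp3. replace (2 * n)%nat with (n + n)%nat by lia.
  rewrite !Cpow_add, Cpow_opp, Cpow_mult_distr.
  transitivity (((- Cone) ^ n * (- Cone) ^ n) * ((Cone - k * (q ^ n * q ^ n)) * qpoch (- Cone) q n * qpoch k q n
        / ((Cone - k) * qpoch (- (k * q)) q n * qpoch q q n)
        * (- Cone) ^ n * k ^ n * (q ^ n * q ^ tri n * q ^ tri n))).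
  field. repeat split; auto; try exact Cone_neq0.
  rewrite Cneg1_sq. field. repeat split; auto.
Qed.

Lemma euler q PA PB : (Cnorm q < 1)%R -> qinf (- q) q PA -> qinf q (q ^ 2) PB -> PA * PB = Cone.
Proof.
  intros hq HA HB. assert (hp := norm_qpow2 q hq).
  destruct (qpoch_exists (q ^ 2) hp (q ^ 2)) as [PC HC].
  assert (HCn : PC <> Czero) by (apply (qinf_neq0 _ hp (q ^ 2)); auto; intros; apply qpoch_p_neq0; auto).
  assert (Hfin : forall n, qpoch (- q) q (2 * n) * qpoch q (q ^ 2) n * qpoch (q ^ 2) (q ^ 2) n = qpoch (q ^ 2) (q ^ 2) (2 * n)).
  { intros n. rewrite !Cpow2. transitivity (qpoch q q (2 * n) * qpoch (- q) q (2 * n)).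
    rewrite (qpoch_double q q n). field. apply qpoch_sq. }
  assert (L1 : Cconv (fun n => qpoch (- q) q (2 * n) * qpoch q (q ^ 2) n * qpoch (q ^ 2) (q ^ 2) n) (PA * PB * PC)).
  { apply Cconv_mult. apply Cconv_mult. apply Cconv_subseq with (u := qpoch (- q) q) (phi := fun n => (2 * n)%nat).
    intros; lia. exact HA. exact HB. exact HC. }
  assert (L2 : Cconv (fun n => qpoch (- q) q (2 * n) * qpoch q (q ^ 2) n * qpoch (q ^ 2) (q ^ 2) n) PC).
  { apply Cconv_ext with (fun n => qpoch (q ^ 2) (q ^ 2) (2 * n)). intros n. rewrite Hfin. reflexivity.
    apply Cconv_subseq with (u := qpoch (q ^ 2) (q ^ 2)) (phi := fun n => (2 * n)%nat). intros; lia. exact HC. }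
  assert (E := Cconv_unique _ _ _ L1 L2).
  transitivity (PA * PB * PC / PC). field. auto. rewrite E. field. auto.
Qed.

Lemma id4 q k : (Cnorm q < 1)%R -> k <> Cone ->
  (exists P1 P2 : Cplx, qinf (k * q) q P1 /\ qinf q (q ^ 2) P2 /\
     Cseries (fun n => (Cone - k * q ^ (2 * n)) * qpoch (k ^ 2) (q ^ 2) n
                        / ((Cone - k) * qpoch (q ^ 2) (q ^ 2) n)
                        * (- Cone) ^ n * q ^ (n * n)) (P1 * P2)).
Proof.
  intros hq hk. assert (hp := norm_qpow2 q hq).
  destruct (qpoch_exists q hq (k * q)) as [P1 HP1].
  destruct (qpoch_exists (q ^ 2) hp q) as [P2 HP2].
  destruct (qpoch_exists q hq (- q)) as [PA HPA].
  exists P1, P2. split; auto. split; auto.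
  assert (hnzq : forall n, qpoch (- q) q n <> Czero).
  { intros n. apply qpoch_small_neq0; auto. rewrite Cnorm_opp. auto. }
  assert (Hz1 : qinf (- q * Czero) q Cone) by (apply qinf_ext with Czero; [field | apply qinf_zero]).
  assert (Hz2 : qinf (k * q * Czero) q Cone) by (apply qinf_ext with Czero; [field | apply qinf_zero]).
  assert (Hg0 : forall j, qpoch (k * q * Czero) q j <> Czero) by (intros j; rewrite qpoch_times_zero; exact Cone_neq0).
  assert (H := stage1 q hq k (- q) Czero P1 Cone PA Cone hnzq Hg0 HP1 Hz1 HPA Hz2).
  assert (HPAn : PA <> Czero) by (apply (qinf_neq0 _ hq _ _ hnzq HPA)).
  assert (Eu := euler q PA P2 hq HPA HP2).
  replace (P1 * Cone / (PA * Cone)) with (P1 * P2) in H.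
  2:{ transitivity (P1 * (PA * P2) / PA). field. auto. rewrite Eu. field. repeat split; auto; try exact Cone_neq0. }
  apply Cseries_ext with (2 := H).
  intros n. assert (Hk := Cone_sub_neq k hk). assert (Hqq := qpoch_p_neq0 q n hq). assert (Hb := hnzq n).
  unfold Tm, Den. rewrite qpoch_times_zero, Bb_zero, (Aa_eq _ k n Hk).
  rewrite (Ee_lin q k (- q) (- q) (- k) n).
  2:{ intros i. rewrite Cpow_S. field. }
  rewrite !Cpow2. rewrite <- (qpoch_sq k q n), <- (qpoch_sq q q n).
  rewrite exp3. replace (2 * n)%nat with (n + n)%nat by lia.
  rewrite !Cpow_add, Cpow_opp.
  transitivity (((- Cone) ^ n * (- Cone) ^ n) * ((Cone - k * (q ^ n * q ^ n)) * (qpoch k q n * qpoch (- k) q n)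
        / ((Cone - k) * (qpoch q q n * qpoch (- q) q n))
        * (- Cone) ^ n * (q ^ n * q ^ tri n * q ^ tri n))).
  field. repeat split; auto; try exact Cone_neq0.
  rewrite Cneg1_sq. field. repeat split; auto.
Qed.

Lemma id6 q k : (Cnorm q < 1)%R -> k <> Cone ->
  (exists P1 P2 : Cplx, qinf (k * q ^ 2) (q ^ 2) P1 /\ qinf q (q ^ 2) P2 /\
     Cseries (fun n => (Cone - k * q ^ (4 * n)) * qpoch k q (2 * n)
                        / ((Cone - k) * qpoch q q (2 * n))
                        * q ^ (2 * n * n - n)) (P1 / P2)).
Proof.
  intros hq hk. assert (hp := norm_qpow2 q hq).
  destruct (qpoch_exists (q ^ 2) hp (k * q ^ 2)) as [P1 HP1].
  destruct (qpoch_exists (q ^ 2) hp q) as [P2 HP2].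
  exists P1, P2. split; auto. split; auto.
  assert (hnzq : forall n, qpoch q (q ^ 2) n <> Czero).
  { intros n. apply qpoch_small_neq0; auto. }
  assert (Hz1 : qinf (q * Czero) (q ^ 2) Cone) by (apply qinf_ext with Czero; [field | apply qinf_zero]).
  assert (Hz2 : qinf (k * q ^ 2 * Czero) (q ^ 2) Cone) by (apply qinf_ext with Czero; [field | apply qinf_zero]).
  assert (Hg0 : forall j, qpoch (k * q ^ 2 * Czero) (q ^ 2) j <> Czero) by (intros j; rewrite qpoch_times_zero; exact Cone_neq0).
  assert (H := stage1 (q ^ 2) hp k q Czero P1 Cone P2 Cone hnzq Hg0 HP1 Hz1 HP2 Hz2).
  assert (HP2n : P2 <> Czero) by (apply (qinf_neq0 _ hp _ _ hnzq HP2)).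
  replace (P1 * Cone / (P2 * Cone)) with (P1 / P2) in H by (field; repeat split; auto; try exact Cone_neq0).
  apply Cseries_ext with (2 := H).
  intros n. assert (Hk := Cone_sub_neq k hk). assert (Hqq := qpoch_p_neq0 (q ^ 2) n hp). assert (Hb := hnzq n).
  unfold Tm, Den. rewrite qpoch_times_zero, Bb_zero, (Aa_eq _ k n Hk).
  rewrite (Ee_lin (q ^ 2) k q q (k * q) n).
  2:{ intros i. rewrite Cpow_S, Cpow2. field. }
  rewrite (qpoch_double k q n), (qpoch_double q q n). rewrite <- !Cpow2.
  rewrite exp2. replace (q ^ (4 * n)) with (q ^ n * q ^ n * (q ^ n * q ^ n))
    by (replace (4 * n)%nat with ((n + n) + (n + n))%nat by lia; rewrite !Cpow_add; reflexivity).
  replace (2 * n)%nat with (n + n)%nat by lia.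
  rewrite !Cpow_add, !Cpow2_pow.
  transitivity (((- Cone) ^ n * (- Cone) ^ n) * ((Cone - k * (q ^ n * q ^ n * (q ^ n * q ^ n))) * (qpoch k (q ^ 2) n * qpoch (k * q) (q ^ 2) n)
        / ((Cone - k) * (qpoch q (q ^ 2) n * qpoch (q ^ 2) (q ^ 2) n))
        * (q ^ n * q ^ tri n * q ^ tri n * q ^ tri n * q ^ tri n))).
  field. repeat split; auto; try exact Cone_neq0.
  rewrite Cneg1_sq. field. repeat split; auto.
Qed.

Lemma prod5 q A B Cq D : (Cnorm q < 1)%R -> qinf q (q ^ 2) A -> qinf (- (q ^ 2)) (q ^ 2) B -> qinf q q Cq ->
  qinf (q ^ 4) (q ^ 4) D -> exists PC, Cq = A * PC /\ D = PC * B.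
Proof.
  intros hq HA HB HC HD. assert (hp := norm_qpow2 q hq).
  destruct (qpoch_exists (q ^ 2) hp (q ^ 2)) as [PC HPC]. exists PC. split.
  - apply (Cconv_unique (fun n => qpoch q q (2 * n))).
    apply Cconv_subseq with (u := qpoch q q) (phi := fun n => (2 * n)%nat). intros; lia. exact HC.
    apply Cconv_ext with (fun n => qpoch q (q ^ 2) n * qpoch (q ^ 2) (q ^ 2) n).
    intros n. rewrite (qpoch_double q q n), Cpow2. reflexivity.
    apply Cconv_mult; auto.
  - apply (Cconv_unique (qpoch (q ^ 4) (q ^ 4))). exact HD.
    apply Cconv_ext with (fun n => qpoch (q ^ 2) (q ^ 2) n * qpoch (- (q ^ 2)) (q ^ 2) n).
    intros n. rewrite qpoch_sq, Cpow4. reflexivity.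
    apply Cconv_mult; auto.
Qed.

Lemma Bb_invq q n : q <> Czero -> Bb (q ^ 2) (- Cinv q) n = (- Cinv q) ^ n * qpoch (- q) (q ^ 2) n.
Proof. intros hq0. apply Bb_lin. intros i. rewrite Cpow2. field. auto. Qed.

Lemma id5_nz q k : (Cnorm q < 1)%R -> k <> Cone -> q <> Czero ->
  ((forall n, qpoch (- (k * q)) (q ^ 2) n <> Czero) ->
   exists P1 P2 P3 P4 : Cplx,
     qinf (k * q ^ 2) (q ^ 2) P1 /\ qinf q q P2 /\
     qinf (- (k * q)) (q ^ 2) P3 /\ qinf (q ^ 4) (q ^ 4) P4 /\
     Cseries (fun n => (Cone - k * q ^ (4 * n)) * qpoch (- q) (q ^ 2) n * qpoch (k ^ 2) (q ^ 4) n
                        / ((Cone - k) * qpoch (- (k * q)) (q ^ 2) n * qpoch (q ^ 4) (q ^ 4) n)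
                        * (- Cone) ^ n * q ^ (n * n)) ((P1 * P2) / (P3 * P4))).
Proof.
  intros hq hk hq0 hnz. assert (hp := norm_qpow2 q hq). assert (hp4 : (Cnorm (q ^ 4) < 1)%R) by (rewrite Cpow4; apply norm_q2; auto).
  destruct (qpoch_exists (q ^ 2) hp (k * q ^ 2)) as [P1 HP1].
  destruct (qpoch_exists q hq q) as [P2 HP2].
  destruct (qpoch_exists (q ^ 2) hp (- (k * q))) as [P3 HP3].
  destruct (qpoch_exists (q ^ 4) hp4 (q ^ 4)) as [P4 HP4].
  destruct (qpoch_exists (q ^ 2) hp q) as [A HA].
  destruct (qpoch_exists (q ^ 2) hp (- (q ^ 2))) as [B HB].
  exists P1, P2, P3, P4. split; auto. split; auto. split; auto. split; auto.
  destruct (prod5 q A B P2 P4 hq HA HB HP2 HP4) as [PC [E2 E4]].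
  assert (Eg : k * q ^ 2 * - Cinv q = - (k * q)) by (rewrite Cpow2; field; auto).
  assert (hnzB : forall n, qpoch (- (q ^ 2)) (q ^ 2) n <> Czero).
  { intros n. apply qpoch_small_neq0; auto. rewrite Cnorm_opp. auto. }
  assert (hnzg : forall n, qpoch (k * q ^ 2 * - Cinv q) (q ^ 2) n <> Czero) by (intros n; rewrite Eg; auto).
  assert (HA' : qinf (- (q ^ 2) * - Cinv q) (q ^ 2) A) by (apply qinf_ext with q; auto; rewrite Cpow2; field; auto).
  assert (HP3' : qinf (k * q ^ 2 * - Cinv q) (q ^ 2) P3) by (rewrite Eg; auto).
  assert (H := stage1 (q ^ 2) hp k (- (q ^ 2)) (- Cinv q) P1 A B P3 hnzB hnzg HP1 HA' HB HP3').
  assert (HBn : B <> Czero) by (apply (qinf_neq0 _ hp _ _ hnzB HB)).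
  assert (HP3n : P3 <> Czero) by (apply (qinf_neq0 _ hp _ _ hnz HP3)).
  assert (HP4n : P4 <> Czero).
  { apply (qinf_neq0 _ hp4 (q ^ 4)); auto. intros n. apply qpoch_p_neq0; auto. }
  assert (HPCn : PC <> Czero). { intros E. apply HP4n. rewrite E4, E. field. }
  replace (P1 * A / (B * P3)) with (P1 * P2 / (P3 * P4)) in H.
  2:{ rewrite E2, E4. field. repeat split; auto. }
  apply Cseries_ext with (2 := H).
  intros n. assert (Hk := Cone_sub_neq k hk). assert (Hqq := qpoch_p_neq0 (q ^ 2) n hp). assert (Hb := hnz n).
  assert (Hbb := hnzB n). assert (Hqn := Cpow_neq0 q n hq0).
  unfold Tm, Den. rewrite Bb_invq by auto. rewrite (Aa_eq _ k n Hk), Eg.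
  rewrite (Ee_lin (q ^ 2) k (- (q ^ 2)) (- (q ^ 2)) (- k) n).
  2:{ intros i. rewrite (Cpow_S (q ^ 2) i). field. }
  rewrite (Cpow2 k), (Cpow4 q), <- (qpoch_sq k (q ^ 2) n), <- (qpoch_sq (q ^ 2) (q ^ 2) n).
  rewrite exp3. replace (q ^ (4 * n)) with (q ^ n * q ^ n * (q ^ n * q ^ n))
    by (replace (4 * n)%nat with ((n + n) + (n + n))%nat by lia; rewrite !Cpow_add; reflexivity).
  replace (2 * n)%nat with (n + n)%nat by lia.
  rewrite !Cpow_add, (Cpow_opp (q ^ 2) n), (Cpow_opp (Cinv q) n), !Cpow2_pow, (Cpow_inv q n hq0).
  transitivity (((- Cone) ^ n * (- Cone) ^ n) * ((Cone - k * (q ^ n * q ^ n * (q ^ n * q ^ n))) * qpoch (- q) (q ^ 2) n * (qpoch k (q ^ 2) n * qpoch (- k) (q ^ 2) n)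
        / ((Cone - k) * qpoch (- (k * q)) (q ^ 2) n * (qpoch (q ^ 2) (q ^ 2) n * qpoch (- (q ^ 2)) (q ^ 2) n))
        * (- Cone) ^ n * (q ^ n * q ^ tri n * q ^ tri n))).
  field. repeat split; auto; try exact Cone_neq0.
  rewrite Cneg1_sq. field. repeat split; auto.
Qed.

Lemma id7_nz q k : (Cnorm q < 1)%R -> k <> Cone -> q <> Czero ->
  ((forall n, qpoch (- (k * q)) (q ^ 2) n <> Czero) ->
   exists P1 P2 P3 P4 : Cplx,
     qinf (k * q ^ 2) (q ^ 2) P1 /\ qinf (- Cone) (q ^ 2) P2 /\
     qinf (- (k * q)) (q ^ 2) P3 /\ qinf q (q ^ 2) P4 /\
     Cseries (fun n => (Cone - k * q ^ (4 * n)) * qpoch (- q) (q ^ 2) n * qpoch k q (2 * n)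
                        / ((Cone - k) * qpoch (- (k * q)) (q ^ 2) n * qpoch q q (2 * n))
                        * q ^ (n * n - n)) ((P1 * P2) / (P3 * P4))).
Proof.
  intros hq hk hq0 hnz. assert (hp := norm_qpow2 q hq).
  destruct (qpoch_exists (q ^ 2) hp (k * q ^ 2)) as [P1 HP1].
  destruct (qpoch_exists (q ^ 2) hp (- Cone)) as [P2 HP2].
  destruct (qpoch_exists (q ^ 2) hp (- (k * q))) as [P3 HP3].
  destruct (qpoch_exists (q ^ 2) hp q) as [P4 HP4].
  exists P1, P2, P3, P4. split; auto. split; auto. split; auto. split; auto.
  assert (Eg : k * q ^ 2 * - Cinv q = - (k * q)) by (rewrite Cpow2; field; auto).
  assert (hnzB : forall n, qpoch q (q ^ 2) n <> Czero).
  { intros n. apply qpoch_small_neq0; auto. }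
  assert (hnzg : forall n, qpoch (k * q ^ 2 * - Cinv q) (q ^ 2) n <> Czero) by (intros n; rewrite Eg; auto).
  assert (HP2' : qinf (q * - Cinv q) (q ^ 2) P2) by (apply qinf_ext with (- Cone); auto; field; auto).
  assert (HP3' : qinf (k * q ^ 2 * - Cinv q) (q ^ 2) P3) by (rewrite Eg; auto).
  assert (H := stage1 (q ^ 2) hp k q (- Cinv q) P1 P2 P4 P3 hnzB hnzg HP1 HP2' HP4 HP3').
  replace (P4 * P3) with (P3 * P4) in H by ring.
  apply Cseries_ext with (2 := H).
  intros n. assert (Hk := Cone_sub_neq k hk). assert (Hqq := qpoch_p_neq0 (q ^ 2) n hp). assert (Hb := hnz n).
  assert (Hbb := hnzB n). assert (Hqn := Cpow_neq0 q n hq0).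
  unfold Tm, Den. rewrite Bb_invq by auto. rewrite (Aa_eq _ k n Hk), Eg.
  rewrite (Ee_lin (q ^ 2) k q q (k * q) n).
  2:{ intros i. rewrite (Cpow_S (q ^ 2) i), Cpow2. field. }
  rewrite (qpoch_double k q n), (qpoch_double q q n). rewrite <- !Cpow2.
  rewrite exp4. replace (q ^ (4 * n)) with (q ^ n * q ^ n * (q ^ n * q ^ n))
    by (replace (4 * n)%nat with ((n + n) + (n + n))%nat by lia; rewrite !Cpow_add; reflexivity).
  replace (2 * n)%nat with (n + n)%nat by lia.
  rewrite !Cpow_add, (Cpow_opp (Cinv q) n), !Cpow2_pow, (Cpow_inv q n hq0).
  transitivity (((- Cone) ^ n * (- Cone) ^ n) * ((Cone - k * (q ^ n * q ^ n * (q ^ n * q ^ n))) * qpoch (- q) (q ^ 2) n * (qpoch k (q ^ 2) n * qpoch (k * q) (q ^ 2) n)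
        / ((Cone - k) * qpoch (- (k * q)) (q ^ 2) n * (qpoch q (q ^ 2) n * qpoch (q ^ 2) (q ^ 2) n))
        * (q ^ tri n * q ^ tri n))).
  field. repeat split; auto; try exact Cone_neq0.
  rewrite Cneg1_sq. field. repeat split; auto.
Qed.

Lemma Cmul_0_r (x : Cplx) : x * Czero = Czero.
Proof. field. Qed.
Lemma Cpow_zeroS n : Czero ^ S n = Czero.
Proof. rewrite Cpow_S. field. Qed.
Lemma qinf_zero' x p : x = Czero -> qinf x p Cone.
Proof. intros ->. apply qinf_zero. Qed.

Lemma id5_z k : k <> Cone ->
   exists P1 P2 P3 P4 : Cplx,
     qinf (k * Czero ^ 2) (Czero ^ 2) P1 /\ qinf Czero Czero P2 /\
     qinf (- (k * Czero)) (Czero ^ 2) P3 /\ qinf (Czero ^ 4) (Czero ^ 4) P4 /\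
     Cseries (fun n => (Cone - k * Czero ^ (4 * n)) * qpoch (- Czero) (Czero ^ 2) n * qpoch (k ^ 2) (Czero ^ 4) n
                        / ((Cone - k) * qpoch (- (k * Czero)) (Czero ^ 2) n * qpoch (Czero ^ 4) (Czero ^ 4) n)
                        * (- Cone) ^ n * Czero ^ (n * n)) ((P1 * P2) / (P3 * P4)).
Proof.
  intros hk. assert (Hk := Cone_sub_neq k hk).
  exists Cone, Cone, Cone, Cone.
  split. apply qinf_zero'. rewrite Cpow_zeroS. field.
  split. apply qinf_zero.
  split. apply qinf_zero'. field.
  split. apply qinf_zero'. rewrite Cpow_zeroS. reflexivity.
  set (f := fun n => (Cone - k * Czero ^ (4 * n)) * qpoch (- Czero) (Czero ^ 2) n * qpoch (k ^ 2) (Czero ^ 4) n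
                        / ((Cone - k) * qpoch (- (k * Czero)) (Czero ^ 2) n * qpoch (Czero ^ 4) (Czero ^ 4) n)
                        * (- Cone) ^ n * Czero ^ (n * n)).
  replace (Cone * Cone / (Cone * Cone)) with (Csum f 1).
  - apply Cseries_finite. intros n Hn. unfold f.
    replace (n * n)%nat with (S (n * n - 1)) by nia. rewrite (Cpow_zeroS (n * n - 1)). apply Cmul_0_r.
  - rewrite Csum_S, Csum_O. unfold f. rewrite !qpoch_O. cbn [Nat.mul]. rewrite !Cpow_O. field. split; auto. exact Cone_neq0.
Qed.

Lemma qpoch_m1_zero m : qpoch (- Cone) (Czero ^ 2) (S m) = Cone + Cone.
Proof.
  induction m.
  - rewrite qpoch_S, qpoch_O, Cpow_O. field.
  - rewrite qpoch_S, IHm, (Cpow_S (Czero ^ 2) m), Cpow_zeroS. field.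
Qed.

Lemma id7_z k : k <> Cone ->
   exists P1 P2 P3 P4 : Cplx,
     qinf (k * Czero ^ 2) (Czero ^ 2) P1 /\ qinf (- Cone) (Czero ^ 2) P2 /\
     qinf (- (k * Czero)) (Czero ^ 2) P3 /\ qinf Czero (Czero ^ 2) P4 /\
     Cseries (fun n => (Cone - k * Czero ^ (4 * n)) * qpoch (- Czero) (Czero ^ 2) n * qpoch k Czero (2 * n)
                        / ((Cone - k) * qpoch (- (k * Czero)) (Czero ^ 2) n * qpoch Czero Czero (2 * n))
                        * Czero ^ (n * n - n)) ((P1 * P2) / (P3 * P4)).
Proof.
  intros hk. assert (Hk := Cone_sub_neq k hk).
  exists Cone, (Cone + Cone), Cone, Cone.
  split. apply qinf_zero'. rewrite Cpow_zeroS. field.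
  split. apply Cconv_eventually_const with 1%nat. intros n Hn. destruct n. lia. apply qpoch_m1_zero.
  split. apply qinf_zero'. field.
  split. apply qinf_zero.
  set (f := fun n => (Cone - k * Czero ^ (4 * n)) * qpoch (- Czero) (Czero ^ 2) n * qpoch k Czero (2 * n)
                        / ((Cone - k) * qpoch (- (k * Czero)) (Czero ^ 2) n * qpoch Czero Czero (2 * n))
                        * Czero ^ (n * n - n)).
  replace (Cone * (Cone + Cone) / (Cone * Cone)) with (Csum f 2).
  - apply Cseries_finite. intros n Hn. unfold f.
    replace (n * n - n)%nat with (S (n * n - n - 1)) by nia. rewrite (Cpow_zeroS (n * n - n - 1)). apply Cmul_0_r.
  - rewrite !Csum_S, Csum_O. unfold f. cbn [Nat.mul Nat.add Nat.sub].
    rewrite ?qpoch_S, ?qpoch_O, ?Cpow_zeroS, ?Cpow_O. field. split; auto. exact Cone_neq0.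
Qed.


Theorem mainTheorem16 (q k : Cplx) (hq : Cnorm q < 1) (hk : k <> Cone) :
  (* (1) *)
  (exists P : Cplx, qinf (k * q) q P /\
     Cseries (fun n => (Cone - k * q ^ (2 * n)) * qpoch k q n
                        / ((Cone - k) * qpoch q q n)
                        * (- Cone) ^ n * k ^ n * q ^ (n * (3 * n - 1) / 2)) P)
  /\
  (* (2) *)
  ((forall n, qpoch (- (k * q)) (q ^ 2) n <> Czero) ->
   exists P1 P2 : Cplx, qinf (k * q ^ 2) (q ^ 2) P1 /\ qinf (- (k * q)) (q ^ 2) P2 /\
     Cseries (fun n => (Cone - k * q ^ (4 * n)) * qpoch (- q) (q ^ 2) n * qpoch k (q ^ 2) n
                        / ((Cone - k) * qpoch (- (k * q)) (q ^ 2) n * qpoch (q ^ 2) (q ^ 2) n)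
                        * (- Cone) ^ n * k ^ n * q ^ (2 * n * n - n)) (P1 / P2))
  /\
  (* (3) *)
  ((forall n, qpoch (- (k * q)) q n <> Czero) ->
   exists P1 P2 : Cplx, qinf (k * q) q P1 /\ qinf (- (k * q)) q P2 /\
     Cseries (fun n => (Cone - k * q ^ (2 * n)) * qpoch (- Cone) q n * qpoch k q n
                        / ((Cone - k) * qpoch (- (k * q)) q n * qpoch q q n)
                        * (- Cone) ^ n * k ^ n * q ^ (n * n)) (P1 / P2))
  /\
  (* (4) *)
  (exists P1 P2 : Cplx, qinf (k * q) q P1 /\ qinf q (q ^ 2) P2 /\
     Cseries (fun n => (Cone - k * q ^ (2 * n)) * qpoch (k ^ 2) (q ^ 2) n
                        / ((Cone - k) * qpoch (q ^ 2) (q ^ 2) n)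
                        * (- Cone) ^ n * q ^ (n * n)) (P1 * P2))
  /\
  (* (5) *)
  ((forall n, qpoch (- (k * q)) (q ^ 2) n <> Czero) ->
   exists P1 P2 P3 P4 : Cplx,
     qinf (k * q ^ 2) (q ^ 2) P1 /\ qinf q q P2 /\
     qinf (- (k * q)) (q ^ 2) P3 /\ qinf (q ^ 4) (q ^ 4) P4 /\
     Cseries (fun n => (Cone - k * q ^ (4 * n)) * qpoch (- q) (q ^ 2) n * qpoch (k ^ 2) (q ^ 4) n
                        / ((Cone - k) * qpoch (- (k * q)) (q ^ 2) n * qpoch (q ^ 4) (q ^ 4) n)
                        * (- Cone) ^ n * q ^ (n * n)) ((P1 * P2) / (P3 * P4)))
  /\
  (* (6) *)
  (exists P1 P2 : Cplx, qinf (k * q ^ 2) (q ^ 2) P1 /\ qinf q (q ^ 2) P2 /\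
     Cseries (fun n => (Cone - k * q ^ (4 * n)) * qpoch k q (2 * n)
                        / ((Cone - k) * qpoch q q (2 * n))
                        * q ^ (2 * n * n - n)) (P1 / P2))
  /\
  (* (7) *)
  ((forall n, qpoch (- (k * q)) (q ^ 2) n <> Czero) ->
   exists P1 P2 P3 P4 : Cplx,
     qinf (k * q ^ 2) (q ^ 2) P1 /\ qinf (- Cone) (q ^ 2) P2 /\
     qinf (- (k * q)) (q ^ 2) P3 /\ qinf q (q ^ 2) P4 /\
     Cseries (fun n => (Cone - k * q ^ (4 * n)) * qpoch (- q) (q ^ 2) n * qpoch k q (2 * n)
                        / ((Cone - k) * qpoch (- (k * q)) (q ^ 2) n * qpoch q q (2 * n))
                        * q ^ (n * n - n)) ((P1 * P2) / (P3 * P4))).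
Proof.
  split. apply id1; auto.
  split. apply id2; auto.
  split. apply id3; auto.
  split. apply id4; auto.
  split. intros hnz. destruct (classic (q = Czero)) as [Hq0|Hq0].
    subst q. apply id5_z; auto. apply id5_nz; auto.
  split. apply id6; auto.
  intros hnz. destruct (classic (q = Czero)) as [Hq0|Hq0].
    subst q. apply id7_z; auto. apply id7_nz; auto.
Qed.
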